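(* Let $k>l\ge0$ be integers with $k+l\ge3$, let $\theta\in\mathbb{R}$, $\xi=e^{i\theta}$, $f:\mathbb{N}\to[0,\infty)$, and $A=\xi(a^\dagger)^ka^l+\xi^*(a^\dagger)^la^k+f(a^\dagger a)$ with domain $\mathcal{D}_0$. Assume that $f(n)n^{-(k+l)/2}$ admits an asymptotic expansion in powers of $n^{-1/2}$, $$f(n)n^{-(k+l)/2}\sim\kappa+\frac{L_1}{n^{1/2}}+\frac{L_2}{n}+\cdots$$ with $\kappa<2$. Then $A$ has deficiency indices $n_+=n_-=k-l$ (so $A$ is not essentially self-adjoint and its self-adjoint extensions are parametrized by $\mathrm{U}(k-l)$).
   Context: $\mathbb{N}=\{0,1,2,\dots\}$. $\mathcal{H}$ is a separable complex Hilbert space with orthonormal basis $(\phi_n)_{n\in\mathbb{N}}$; $\mathcal{D}_0$ is the set of finite linear combinations of the $\phi_n$. The operators $a,a^\dagger$ have domain $\mathcal{D}_0$ and act by $a\phi_n=\sqrt{n}\,\phi_{n-1}$ ($a\phi_0=0$), $a^\dagger\phi_n=\sqrt{n+1}\,\phi_{n+1}$, extended linearly. $f(a^\dagger a)$ has domain $\mathcal{D}_0$ and $f(a^\dagger a)\phi_n=f(n)\phi_n$. Deficiency indices: $n_\pm=\dim\operatorname{Ran}(A\pm i)^\perp$. A function $g:\mathbb{N}\to\mathbb{C}$ admits the asymptotic expansion $g(n)\sim\sum_{s\ge0}\lambda_sn^{-s/2}$ if for every $S\in\mathbb{N}$ there are $C,N$ with $|g(n)-\sum_{s=0}^S\lambda_sn^{-s/2}|\le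 Cn^{-(S+1)/2}$ for all $n\ge N$. *)

(* Defs.v *)
From Stdlib Require Import Reals List.
From Coquelicot Require Import Coquelicot.
Import ListNotations.
Open Scope R_scope.

(* We realize H = l^2(N) with orthonormal basis phi_n = indicator of n.
   A vector is a sequence psi : nat -> C. *)
Definition vec := nat -> C.

Definition in_l2 (psi : vec) : Prop := ex_series (fun n => (Cmod (psi n)) ^ 2).

(* D_0 : finite linear combinations of the phi_n = finitely supported sequences *)
Definition in_D0 (phi : vec) : Prop := exists N : nat, forall n, (N <= n)%nat -> phi n = 0%C.

(* annihilation: a phi_n = sqrt n phi_{n-1}, i.e. (a psi)(n) = sqrt(n+1) psi(n+1) *)
Definition op_a (psi : vec) : vec := fun n => Cmult (RtoC (sqrt (INR (S n)))) (psi (S n)).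
(* creation: a^dag phi_n = sqrt(n+1) phi_{n+1}, i.e. (a^dag psi)(n) = sqrt n psi(n-1), 0 at n=0 *)
Definition op_adag (psi : vec) : vec :=
  fun n => match n with O => 0%C | S m => Cmult (RtoC (sqrt (INR n))) (psi m) end.
Definition op_fN (f : nat -> R) (psi : vec) : vec := fun n => Cmult (RtoC (f n)) (psi n).

Definition vadd (u v : vec) : vec := fun n => Cplus (u n) (v n).
Definition vscal (c : C) (u : vec) : vec := fun n => Cmult c (u n).

Definition mono (p q : nat) (psi : vec) : vec := Nat.iter p op_adag (Nat.iter q op_a psi).

Definition xi (theta : R) : C := (cos theta, sin theta).

Definition opA (k l : nat) (theta : R) (f : nat -> R) (psi : vec) : vec :=
  vadd (vadd (vscal (xi theta) (mono k l psi)) (vscal (Cconj (xi theta)) (mono l k psi)))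
       (op_fN f psi).

(* inner product <psi, chi> = sum_n conj(psi n) chi n (antilinear in the first slot);
   orthogonality: this series sums to 0 *)
Definition orth (psi chi : vec) : Prop :=
  is_series (fun n => Cmult (Cconj (psi n)) (chi n)) (RtoC 0).

(* Ran(A + s i)^perp, s = +1 or -1, as a subset of H = l^2 *)
Definition defect_space (A : vec -> vec) (s : R) (psi : vec) : Prop :=
  in_l2 psi /\
  forall phi, in_D0 phi -> orth psi (vadd (A phi) (vscal (RtoC s * Ci)%C phi)).

Definition csum (d : nat) (g : nat -> C) : C :=
  fold_right Cplus 0%C (map g (seq 0 d)).

Definition has_dim (K : vec -> Prop) (d : nat) : Prop :=
  exists v : nat -> vec,
    (forall j, (j < d)%nat -> K (v j)) /\
    (forall c : nat -> C, (forall n, csum d (fun j => Cmult (c j) (v j n)) = 0%C) ->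
        forall j, (j < d)%nat -> c j = 0%C) /\
    (forall psi, K psi -> exists c : nat -> C,
        forall n, psi n = csum d (fun j => Cmult (c j) (v j n))).

Definition def_index_plus (A : vec -> vec) (d : nat) : Prop := has_dim (defect_space A 1) d.
Definition def_index_minus (A : vec -> vec) (d : nat) : Prop := has_dim (defect_space A (-1)) d.

Definition asymp_expansion (g : nat -> R) (lam : nat -> R) : Prop :=
  forall S : nat, exists (Cst : R) (N : nat), forall n : nat, (N <= n)%nat ->
    Rabs (g n - sum_f_R0 (fun s => lam s * Rpower (INR n) (- INR s / 2)) S)
      <= Cst * Rpower (INR n) (- INR (S + 1) / 2).

(* Main.v *)
Require Import Defs.
From Stdlib Require Import Reals Lra Lia Arith List.
From Coquelicot Require Import Coquelicot.
Open Scope R_scope.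

Fixpoint ssum (a : nat -> R) (n : nat) : R :=
  match n with O => 0 | S n => ssum a n + a n end.

Definition summable (a : nat -> R) := exists M, forall n, ssum (fun t => Rabs (a t)) n <= M.
Definition BV (x : nat -> R) := summable (fun t => x (S t) - x t).

Lemma ssum_ext a b n : (forall t, a t = b t) -> ssum a n = ssum b n.
Proof. intros H; induction n; simpl; auto. rewrite IHn, H; auto. Qed.

Lemma ssum_nonneg a n : (forall t, 0 <= a t) -> 0 <= ssum a n.
Proof. intros H; induction n; simpl. lra. specialize (H n); lra. Qed.

Lemma ssum_mono a n m : (forall t, 0 <= a t) -> (n <= m)%nat -> ssum a n <= ssum a m.
Proof. intros H Hnm; induction Hnm. lra. simpl. specialize (H m); lra. Qed.

Lemma ssum_plus a b n : ssum (fun t => a t + b t) n = ssum a n + ssum b n.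
Proof. induction n; simpl; lra. Qed.

Lemma ssum_scal c a n : ssum (fun t => c * a t) n = c * ssum a n.
Proof. induction n; simpl. ring. rewrite IHn; ring. Qed.

Lemma ssum_le a b n : (forall t, a t <= b t) -> ssum a n <= ssum b n.
Proof. intros H; induction n; simpl. lra. specialize (H n); lra. Qed.

Lemma summable_le_ev (a c : nat -> R) (T0 : nat) :
  (forall t, (T0 <= t)%nat -> Rabs (a t) <= c t) -> summable c -> summable a.
Proof.
  intros H [M HM].
  exists (ssum (fun t => Rabs (a t)) T0 + M).
  intros n.
  assert (forall n, ssum (fun t => Rabs (a t)) n <= ssum (fun t => Rabs (a t)) T0 + ssum (fun t => Rabs (c t)) n).
  { induction n0; simpl.
    - pose proof (ssum_nonneg (fun t => Rabs (a t)) T0 (fun t => Rabs_pos _)); lra.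
    - destruct (le_lt_dec T0 n0).
      + specialize (H n0 l). pose proof (Rle_abs (c n0)); lra.
      + pose proof (ssum_mono (fun t => Rabs (a t)) (S n0) T0 (fun t => Rabs_pos _) l).
        simpl in H0. pose proof (ssum_nonneg (fun t => Rabs (c t)) n0 (fun t => Rabs_pos _)).
        pose proof (Rabs_pos (c n0)). lra. }
  specialize (H0 n); specialize (HM n); lra.
Qed.

Lemma summable_le (a c : nat -> R) :
  (forall t, Rabs (a t) <= c t) -> summable c -> summable a.
Proof. intros H; apply summable_le_ev with (T0 := 0%nat); auto. Qed.

Lemma summable_abs a : summable a -> summable (fun t => Rabs (a t)).
Proof. intros [M H]; exists M; intros n; rewrite (ssum_ext _ (fun t => Rabs (a t))); auto.
  intros; apply Rabs_Rabsolu. Qed.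

Lemma summable_plus a b : summable a -> summable b -> summable (fun t => a t + b t).
Proof.
  intros [M1 H1] [M2 H2]. exists (M1 + M2). intros n.
  specialize (H1 n); specialize (H2 n).
  assert (ssum (fun t => Rabs (a t + b t)) n <= ssum (fun t => Rabs (a t) + Rabs (b t)) n).
  { apply ssum_le; intros; apply Rabs_triang. }
  rewrite ssum_plus in H. lra.
Qed.

Lemma summable_scal c a : summable a -> summable (fun t => c * a t).
Proof.
  intros [M H]. exists (Rabs c * M). intros n.
  rewrite (ssum_ext _ (fun t => Rabs c * Rabs (a t))).
  2:{ intros; apply Rabs_mult. }
  rewrite ssum_scal. apply Rmult_le_compat_l. apply Rabs_pos. auto.
Qed.

Lemma summable_opp a : summable a -> summable (fun t => - a t).
Proof. intros H. apply (summable_le _ (fun t => Rabs (a t))).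
  intros; rewrite Rabs_Ropp; lra.
  destruct H as [M H]; exists M; intros n; rewrite (ssum_ext _ (fun t => Rabs (a t))); auto.
  intros; apply Rabs_Rabsolu. Qed.

Lemma summable_shift a : summable (fun t => a (S t)) -> summable a.
Proof.
  intros [M H]. exists (Rabs (a 0%nat) + M). intros n.
  assert (forall n, ssum (fun t => Rabs (a t)) (S n) = Rabs (a 0%nat) + ssum (fun t => Rabs (a (S t))) n).
  { induction n0; simpl in *. ring. rewrite IHn0. ring. }
  destruct n. simpl. pose proof (Rabs_pos (a 0%nat)). specialize (H 0%nat); simpl in H. lra.
  rewrite H0. specialize (H n). lra.
Qed.

Lemma summable_shiftn a c : summable (fun t => a (t + c)%nat) -> summable a.
Proof.
  revert a; induction c; intros a H.
  - eapply summable_le; [|apply summable_abs; exact H]. intros t; simpl; rewrite Nat.add_0_r; lra.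
  - apply IHc. apply summable_shift. eapply summable_le; [|apply summable_abs; exact H].
    intros t; simpl. replace (S (t + c)) with (t + S c)%nat by lia. lra.
Qed.


Lemma summable_bound a : summable a -> exists M, forall n, ssum (fun t => Rabs (a t)) n <= M.
Proof. auto. Qed.

Lemma BV_mono_dec y : (forall t, y (S t) <= y t) -> (forall t, 0 <= y t) -> BV y.
Proof.
  intros H1 H2. exists (y 0%nat). intros n.
  assert (ssum (fun t => Rabs (y (S t) - y t)) n = y 0%nat - y n).
  { induction n; simpl. ring. rewrite IHn. rewrite Rabs_left1. ring. specialize (H1 n); lra. }
  rewrite H. specialize (H2 n); lra.
Qed.

Lemma BV_bounded x : BV x -> exists B, forall t, Rabs (x t) <= B.
Proof.
  intros [M H]. exists (Rabs (x 0%nat) + M). intros t.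
  assert (forall t, Rabs (x t) <= Rabs (x 0%nat) + ssum (fun t => Rabs (x (S t) - x t)) t).
  { induction t0; simpl. lra.
    apply Rle_trans with (Rabs (x t0) + Rabs (x (S t0) - x t0)); [|lra].
    replace (x (S t0)) with (x t0 + (x (S t0) - x t0)) at 1 by ring.
    apply Rabs_triang. }
  specialize (H0 t); specialize (H t); lra.
Qed.

Lemma BV_const c : BV (fun _ => c).
Proof. exists 0. intros n. rewrite (ssum_ext _ (fun _ => 0)).
  induction n; simpl; lra. intros; replace (c - c) with 0 by ring; apply Rabs_R0. Qed.

Lemma BV_plus x y : BV x -> BV y -> BV (fun t => x t + y t).
Proof. intros H1 H2. eapply summable_le; [|apply summable_plus; [exact (summable_abs _ H1)| exact (summable_abs _ H2)]].
  intros t. simpl. replace (x (S t) + y (S t) - (x t + y t)) with ((x (S t) - x t) + (y (S t) - y t)) by ring. apply Rabs_triang. Qed.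

Lemma BV_scal c x : BV x -> BV (fun t => c * x t).
Proof. intros H. eapply summable_le; [|apply summable_abs; exact (summable_scal c _ H)].
  intros t. replace (c * x (S t) - c * x t) with (c * (x (S t) - x t)) by ring. lra. Qed.

Lemma BV_mult x y : BV x -> BV y -> BV (fun t => x t * y t).
Proof.
  intros H1 H2. destruct (BV_bounded x H1) as [Bx Hx]. destruct (BV_bounded y H2) as [By Hy].
  eapply summable_le; [|apply summable_plus; [exact (summable_scal Bx _ (summable_abs _ H2)) | exact (summable_scal By _ (summable_abs _ H1))]].
  intros t. simpl.
  replace (x (S t) * y (S t) - x t * y t) with (x (S t) * (y (S t) - y t) + y t * (x (S t) - x t)) by ring.
  eapply Rle_trans. apply Rabs_triang. rewrite !Rabs_mult.
  apply Rplus_le_compat; apply Rmult_le_compat; try apply Rabs_pos; auto; lra.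
Qed.

Lemma BV_inv x c : 0 < c -> (forall t, c <= x t) -> BV x -> BV (fun t => / x t).
Proof.
  intros Hc Hx H. eapply summable_le; [|exact (summable_scal (/ (c * c)) _ (summable_abs _ H))].
  intros t. simpl. pose proof (Hx t); pose proof (Hx (S t)).
  replace (/ x (S t) - / x t) with (- (x (S t) - x t) / (x t * x (S t))) by (field; lra).
  unfold Rdiv. rewrite Rabs_mult, Rabs_Ropp. rewrite Rmult_comm. apply Rmult_le_compat_r. apply Rabs_pos.
  rewrite Rabs_inv. rewrite Rabs_right by nra. apply Rinv_le_contravar. nra. nra.
Qed.

Lemma BV_sqrt x c : 0 < c -> (forall t, c <= x t) -> BV x -> BV (fun t => sqrt (x t)).
Proof.
  intros Hc Hx H. eapply summable_le; [|exact (summable_scal (/ (2 * sqrt c)) _ (summable_abs _ H))].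
  intros t. simpl. pose proof (Hx t); pose proof (Hx (S t)).
  pose proof (sqrt_lt_R0 c Hc).
  assert (sqrt c <= sqrt (x t)) by (apply sqrt_le_1_alt; lra).
  assert (sqrt c <= sqrt (x (S t))) by (apply sqrt_le_1_alt; lra).
  replace (sqrt (x (S t)) - sqrt (x t)) with ((x (S t) - x t) / (sqrt (x (S t)) + sqrt (x t))).
  2:{ pose proof (sqrt_sqrt (x t) ltac:(lra)). pose proof (sqrt_sqrt (x (S t)) ltac:(lra)).
        field_simplify_eq; [|lra]. nra. }
  unfold Rdiv. rewrite Rabs_mult. rewrite Rmult_comm. apply Rmult_le_compat_r. apply Rabs_pos.
  rewrite Rabs_inv. rewrite Rabs_right by lra. apply Rinv_le_contravar; lra.
Qed.

Lemma summable_ex_series a : (forall t, 0 <= a t) -> summable a -> ex_series a.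
Proof.
  intros Hp [M H].
  assert (Hs : forall n, sum_n a n = ssum a (S n)).
  { induction n. rewrite sum_O. simpl. ring. rewrite sum_Sn, IHn. simpl. reflexivity. }
  destruct (ex_finite_lim_seq_incr (sum_n a) M) as [l Hl].
  - intros n. rewrite !Hs. simpl. specialize (Hp (S n)). simpl in Hp. lra.
  - intros n. rewrite Hs. specialize (H (S n)).
    rewrite (ssum_ext (fun t => Rabs (a t)) a) in H; auto. intros; apply Rabs_right; specialize (Hp t); lra.
  - exists l. apply Hl.
Qed.

Lemma ineq32 X : 1 <= X -> / ((X + 1) * sqrt (X + 1)) <= 2 * (/ sqrt X - / sqrt (X + 1)).
Proof.
  intros HX. set (u := sqrt X). set (v := sqrt (X + 1)).
  assert (Hu : 0 < u) by (apply sqrt_lt_R0; lra).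
  assert (Hv : 0 < v) by (apply sqrt_lt_R0; lra).
  assert (Hu2 : u * u = X) by (apply sqrt_sqrt; lra).
  assert (Hv2 : v * v = X + 1) by (apply sqrt_sqrt; lra).
  assert (u <= v) by (apply sqrt_le_1_alt; lra).
  rewrite <- Hv2.
  assert (v - u = / (u + v)).
  { apply (Rmult_eq_reg_l (u + v)); [|lra]. rewrite Rinv_r by lra. nra. }
  replace (2 * (/ u - / v)) with (2 * (v - u) / (u * v)) by (field; lra).
  rewrite H0. 
  replace (2 * / (u + v) / (u * v)) with (/ (u * v * (u + v) / 2)) by (field; lra).
  apply Rinv_le_contravar. assert (0 < u*v) by nra. nra. nra.
Qed.

Lemma Z32 : summable (fun n => / ((INR n + 1) * sqrt (INR n + 1))).
Proof.
  apply summable_shift.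
  assert (BV (fun n => 2 * / sqrt (INR n + 1))).
  { apply BV_mono_dec.
    - intros t. rewrite S_INR. apply Rmult_le_compat_l. lra.
      apply Rinv_le_contravar. apply sqrt_lt_R0. pose proof (pos_INR t); lra.
      apply sqrt_le_1_alt. lra.
    - intros t. pose proof (pos_INR t). assert (0 < sqrt (INR t + 1)) by (apply sqrt_lt_R0; lra).
      pose proof (Rinv_0_lt_compat _ H0). lra. }
  eapply summable_le; [|exact (summable_abs _ H)].
  intros t. rewrite S_INR. pose proof (pos_INR t).
  pose proof (ineq32 (INR t + 1) ltac:(lra)).
  assert (0 < (INR t + 1 + 1) * sqrt (INR t + 1 + 1)).
  { apply Rmult_lt_0_compat. lra. apply sqrt_lt_R0; lra. }
  rewrite Rabs_right by (left; apply Rinv_0_lt_compat; auto).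
  eapply Rle_trans. exact H1. rewrite S_INR. rewrite Rabs_left1. lra.
  assert (/ sqrt (INR t + 1 + 1) <= / sqrt (INR t + 1)).
  { apply Rinv_le_contravar. apply sqrt_lt_R0; lra. apply sqrt_le_1_alt; lra. }
  lra.
Qed.

Lemma summable_unshift a : summable a -> summable (fun t => a (S t)).
Proof.
  intros [M H]. exists M. intros n.
  assert (forall n, ssum (fun t => Rabs (a (S t))) n <= ssum (fun t => Rabs (a t)) (S n)).
  { induction n0; simpl. pose proof (Rabs_pos (a 0%nat)). lra.
    simpl in IHn0. lra. }
  specialize (H0 n). specialize (H (S n)). lra.
Qed.

Lemma exp_le_mono x y : x <= y -> exp x <= exp y.
Proof. intros [H|H]. left; apply exp_increasing; auto. subst; lra. Qed.

Lemma posdef A B G mu a c R :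
  0 < A -> 0 < B -> 0 < mu -> 0 <= a -> 0 <= c -> R * R <= a * c ->
  G * G <= 4 * mu * mu * A * B -> 0 <= mu * (A * a + B * c) + G * R.
Proof.
  intros HA HB Hmu Ha Hc HR HG.
  assert (H1 : 0 <= mu * (A * a + B * c)) by (apply Rmult_le_pos; nra).
  assert (H2 : (G * R) * (G * R) <= (mu * (A * a + B * c)) * (mu * (A * a + B * c))).
  { assert ((G*R)*(G*R) = (G*G)*(R*R)) by ring. rewrite H.
    apply Rle_trans with ((4 * mu * mu * A * B) * (a * c)).
    apply Rmult_le_compat. nra. nra. auto. auto.
    pose proof (Rle_0_sqr (A*a - B*c)); unfold Rsqr in *.
    assert (0 <= mu * mu) by nra.
    replace ((mu * (A * a + B * c)) * (mu * (A * a + B * c))) with (mu*mu*((A*a+B*c)*(A*a+B*c))) by ring.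
    replace (4 * mu * mu * A * B * (a * c)) with (mu*mu*(4*(A*a)*(B*c))) by ring.
    apply Rmult_le_compat_l. auto. nra. }
  destruct (Rle_dec 0 (G * R)). lra.
  assert (- (G*R) <= mu * (A * a + B * c)).
  { apply Rsqr_incr_0_var. unfold Rsqr. nra. auto. }
  lra.
Qed.

Lemma cross_bound1 x1 x2 y1 y2 : Rabs (x1*y1 + x2*y2) <= x1^2+x2^2+(y1^2+y2^2).
Proof. pose proof (Rle_0_sqr (x1 - y1)). pose proof (Rle_0_sqr (x2 - y2)).
  pose proof (Rle_0_sqr (x1 + y1)). pose proof (Rle_0_sqr (x2 + y2)). unfold Rsqr in *.
  apply Rabs_le; split; nra. Qed.
Lemma cross_bound2 x1 x2 y1 y2 : Rabs (x2*y1 - x1*y2) <= x1^2+x2^2+(y1^2+y2^2).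
Proof. pose proof (Rle_0_sqr (x2 - y1)). pose proof (Rle_0_sqr (x1 - y2)).
  pose proof (Rle_0_sqr (x2 + y1)). pose proof (Rle_0_sqr (x1 + y2)). unfold Rsqr in *.
  apply Rabs_le; split; nra. Qed.

Lemma energy (b g : nat -> R) (s Cb eta : R) (z1 z2 : nat -> R) (T0 : nat) :
  (forall t, b (S t) * z1 (S (S t)) = -(b t * z1 t + g (S t) * z1 (S t) - s * z2 (S t))) ->
  (forall t, b (S t) * z2 (S (S t)) = -(b t * z2 t + g (S t) * z2 (S t) + s * z1 (S t))) ->
  (forall t, 1 <= b t) -> 1 <= Cb -> (forall t, b (S t) <= Cb * b t) ->
  summable (fun t => b (S t) ^ 2 / (b t * b (S (S t))) - 1) ->
  summable (fun t => / b t) ->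
  BV (fun t => g t / b t) ->
  0 < eta < 1 ->
  (forall t, (T0 <= t)%nat -> g (S t) ^ 2 <= 4 * (1 - eta) ^ 2 * b t * b (S t)) ->
  exists K, forall t, (T0 <= t)%nat -> z1 (S t) ^ 2 + z2 (S t) ^ 2 <= K / b t.
Proof.
  intros Hr1 Hr2 Hb1 HCb HCb2 Hx Hib Hrho Heta Hpd.
  set (E := fun t => b t ^ 2 / b (S t) * (z1 t ^ 2 + z2 t ^ 2) + b t * (z1 (S t) ^ 2 + z2 (S t) ^ 2)
                     + g (S t) * b t / b (S t) * (z1 t * z1 (S t) + z2 t * z2 (S t))).
  set (Nn := fun t => z1 t ^ 2 + z2 t ^ 2 + (z1 (S t) ^ 2 + z2 (S t) ^ 2)).
  set (rho := fun t => g t / b t).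
  set (D := fun t => Rabs (b (S t) ^ 2 / b (S (S t)) - b t + s ^ 2 / b (S t) + g (S t) * (rho (S t) - rho (S (S t))))
                   + Rabs (b t * (rho (S t) - rho (S (S t)))) + Rabs (2 * b t * s / b (S t))).
  assert (Hbpos : forall t, 0 < b t) by (intros t; specialize (Hb1 t); lra).
  assert (Hstep : forall t, Rabs (E (S t) - E t) <= D t * Nn t).
  { intros t.
    assert (Hw1 : z1 (S (S t)) = -(b t * z1 t + g (S t) * z1 (S t) - s * z2 (S t)) / b (S t)).
    { rewrite <- Hr1. field. specialize (Hbpos (S t)); lra. }
    assert (Hw2 : z2 (S (S t)) = -(b t * z2 t + g (S t) * z2 (S t) + s * z1 (S t)) / b (S t)).
    { rewrite <- Hr2. field. specialize (Hbpos (S t)); lra. }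
    assert (Hid : E (S t) - E t =
      (b (S t) ^ 2 / b (S (S t)) - b t + s ^ 2 / b (S t) + g (S t) * (rho (S t) - rho (S (S t)))) * (z1 (S t) ^ 2 + z2 (S t) ^ 2)
      + (b t * (rho (S t) - rho (S (S t)))) * (z1 t * z1 (S t) + z2 t * z2 (S t))
      + (2 * b t * s / b (S t)) * (z2 t * z1 (S t) - z1 t * z2 (S t))).
    { unfold E, rho. rewrite Hw1, Hw2. pose proof (Hbpos t). pose proof (Hbpos (S t)). pose proof (Hbpos (S (S t))).
      field. repeat split; apply Rgt_not_eq; lra. }
    rewrite Hid. unfold D, Nn.
    set (v2 := z1 (S t) ^ 2 + z2 (S t) ^ 2).
    set (RR := z1 t * z1 (S t) + z2 t * z2 (S t)).
    set (II := z2 t * z1 (S t) - z1 t * z2 (S t)).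
    set (a1 := (b (S t) ^ 2 / b (S (S t)) - b t + s ^ 2 / b (S t) + g (S t) * (rho (S t) - rho (S (S t))))).
    set (a2 := (b t * (rho (S t) - rho (S (S t))))).
    set (a3 := (2 * b t * s / b (S t))).
    assert (Hv : 0 <= v2 <= z1 t ^ 2 + z2 t ^ 2 + v2) by (unfold v2; split; nra).
    assert (HR : Rabs RR <= z1 t ^ 2 + z2 t ^ 2 + v2).
    { unfold RR, v2. apply cross_bound1. }
    assert (HI : Rabs II <= z1 t ^ 2 + z2 t ^ 2 + v2).
    { unfold II, v2. apply cross_bound2. }
    eapply Rle_trans. apply Rabs_triang. eapply Rle_trans. apply Rplus_le_compat_r. apply Rabs_triang.
    rewrite !Rabs_mult. rewrite (Rabs_right v2) by lra.
    pose proof (Rabs_pos a1). pose proof (Rabs_pos a2). pose proof (Rabs_pos a3).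
    assert (Rabs a1 * v2 <= Rabs a1 * (z1 t ^ 2 + z2 t ^ 2 + v2)) by (apply Rmult_le_compat_l; lra).
    assert (Rabs a2 * Rabs RR <= Rabs a2 * (z1 t ^ 2 + z2 t ^ 2 + v2)) by (apply Rmult_le_compat_l; lra).
    assert (Rabs a3 * Rabs II <= Rabs a3 * (z1 t ^ 2 + z2 t ^ 2 + v2)) by (apply Rmult_le_compat_l; lra).
    lra. }
  destruct (BV_bounded _ Hrho) as [Brho HBrho].
  set (c := fun t => Rabs (b (S t) ^ 2 / (b t * b (S (S t))) - 1) + s ^ 2 * / b (S t)
                     + (Brho * Cb + 1) * Rabs (rho (S (S t)) - rho (S t)) + 2 * Rabs s * / b (S t)).
  assert (Hc : summable c).
  { unfold c. repeat apply summable_plus.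
    - apply summable_abs; auto.
    - apply summable_scal. apply (summable_unshift (fun t => / b t)); auto.
    - apply summable_scal. apply summable_abs. apply (summable_unshift (fun t => rho (S t) - rho t)). exact Hrho.
    - apply summable_scal. apply (summable_unshift (fun t => / b t)); auto. }
  assert (HDc : forall t, D t / b t <= c t).
  { intros t. unfold D, c.
    pose proof (Hbpos t) as H0; pose proof (Hbpos (S t)) as H1; pose proof (Hbpos (S (S t))) as H2.
    pose proof (Hb1 t) as H0'; pose proof (Hb1 (S t)) as H1'.
    assert (Hdb : forall x, Rabs x / b t = Rabs (x / b t)).
    { intros x. unfold Rdiv. rewrite Rabs_mult. rewrite (Rabs_right (/ b t)); auto. left; apply Rinv_0_lt_compat; lra. }
    match goal with |- ?L <= _ => assert (HD : L = Rabs (b (S t) ^ 2 / b (S (S t)) - b t + s ^ 2 / b (S t) + g (S t) * (rho (S t) - rho (S (S t)))) / b t + Rabs (b t * (rho (S t) - rho (S (S t)))) / b t + Rabs (2 * b t * s / b (S t)) / b t) by (field; lra) end.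
    rewrite HD.
    rewrite !Hdb.
    assert (Hrb : Rabs (rho (S t) * (b (S t) / b t)) <= Brho * Cb).
    { rewrite Rabs_mult. apply Rmult_le_compat; try apply Rabs_pos. apply HBrho.
      rewrite Rabs_right. apply (Rmult_le_reg_r (b t)). lra. unfold Rdiv. rewrite Rmult_assoc, Rinv_l by lra. rewrite Rmult_1_r. auto.
      left. apply Rdiv_lt_0_compat; lra. }
    assert (Hs2 : Rabs (s ^ 2 * / (b t * b (S t))) <= s ^ 2 * / b (S t)).
    { rewrite Rabs_mult. rewrite (Rabs_right (s^2)) by (apply Rle_ge; apply pow2_ge_0).
      apply Rmult_le_compat_l. apply pow2_ge_0. rewrite Rabs_right. apply Rinv_le_contravar. lra. nra.
      left; apply Rinv_0_lt_compat; nra. }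
    assert (Hsym : Rabs (rho (S t) - rho (S (S t))) = Rabs (rho (S (S t)) - rho (S t))).
    { rewrite <- Rabs_Ropp. f_equal; ring. }
    replace ((b (S t) ^ 2 / b (S (S t)) - b t + s ^ 2 / b (S t) + g (S t) * (rho (S t) - rho (S (S t)))) / b t)
      with ((b (S t) ^ 2 / (b t * b (S (S t))) - 1) + s ^ 2 * / (b t * b (S t)) + (rho (S t) * (b (S t) / b t)) * (rho (S t) - rho (S (S t)))).
    2:{ unfold rho. field. repeat split; apply Rgt_not_eq; lra. }
    replace (b t * (rho (S t) - rho (S (S t))) / b t) with (rho (S t) - rho (S (S t))) by (field; lra).
    replace (2 * b t * s / b (S t) / b t) with (2 * s * / b (S t)) by (field; lra).
    assert (H3 : Rabs (rho (S t) * (b (S t) / b t) * (rho (S t) - rho (S (S t)))) <= Brho * Cb * Rabs (rho (S (S t)) - rho (S t))).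
    { rewrite Rabs_mult, <- Hsym. apply Rmult_le_compat_r. apply Rabs_pos. auto. }
    assert (H4 : Rabs (2 * s * / b (S t)) = 2 * Rabs s * / b (S t)).
    { rewrite !Rabs_mult. rewrite (Rabs_right 2) by lra. rewrite (Rabs_right (/ b (S t))). auto. left; apply Rinv_0_lt_compat; lra. }
    pose proof (Rabs_triang ((b (S t) ^ 2 / (b t * b (S (S t))) - 1) + s ^ 2 * / (b t * b (S t))) (rho (S t) * (b (S t) / b t) * (rho (S t) - rho (S (S t))))).
    pose proof (Rabs_triang (b (S t) ^ 2 / (b t * b (S (S t))) - 1) (s ^ 2 * / (b t * b (S t)))).
    rewrite H4, Hsym. lra. }
  assert (Hlow : forall t, (T0 <= t)%nat -> eta * (b t / Cb) * Nn t <= E t /\ eta * b t * (z1 (S t) ^ 2 + z2 (S t) ^ 2) <= E t).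
  { intros t Ht.
    pose proof (Hbpos t) as H0; pose proof (Hbpos (S t)) as H1.
    set (A := b t ^ 2 / b (S t)). set (a := z1 t ^ 2 + z2 t ^ 2). set (cc := z1 (S t) ^ 2 + z2 (S t) ^ 2).
    set (G := g (S t) * b t / b (S t)). set (RR := z1 t * z1 (S t) + z2 t * z2 (S t)).
    assert (HA : 0 < A) by (unfold A; apply Rdiv_lt_0_compat; nra).
    assert (Ha : 0 <= a) by (unfold a; nra). assert (Hcc : 0 <= cc) by (unfold cc; nra).
    assert (HRR : RR * RR <= a * cc).
    { unfold RR, a, cc. pose proof (Rle_0_sqr (z1 t * z2 (S t) - z2 t * z1 (S t))). unfold Rsqr in *. nra. }
    assert (HG : G * G <= 4 * (1 - eta) * (1 - eta) * A * b t).
    { unfold G, A. specialize (Hpd t Ht).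
      replace (g (S t) * b t / b (S t) * (g (S t) * b t / b (S t))) with (g (S t) ^ 2 * (b t ^ 2 / (b (S t) * b (S t)))) by (field; lra).
      apply Rle_trans with (4 * (1 - eta) ^ 2 * b t * b (S t) * (b t ^ 2 / (b (S t) * b (S t)))).
      apply Rmult_le_compat_r. left; apply Rdiv_lt_0_compat; nra. auto.
      right. field. lra. }
    pose proof (posdef A (b t) G (1 - eta) a cc RR HA H0 ltac:(lra) Ha Hcc HRR HG).
    assert (HE : E t = A * a + b t * cc + G * RR) by (unfold E, A, a, cc, G, RR; ring).
    assert (HAb : b t / Cb <= A).
    { unfold A. apply (Rmult_le_reg_r (Cb * b (S t))). nra.
      replace (b t / Cb * (Cb * b (S t))) with (b t * b (S t)) by (field; lra).
      replace (b t ^ 2 / b (S t) * (Cb * b (S t))) with (b t * (Cb * b t)) by (field; lra).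
      apply Rmult_le_compat_l; try lra. apply HCb2. }
    assert (Hbb : b t / Cb <= b t).
    { apply (Rmult_le_reg_r Cb). lra. replace (b t / Cb * Cb) with (b t) by (field; lra). nra. }
    split.
    - assert (HN : Nn t = a + cc) by (unfold Nn, a, cc; ring). rewrite HN, HE.
      assert (eta * (b t / Cb) * (a + cc) <= eta * (A * a + b t * cc)).
      { rewrite Rmult_assoc. apply Rmult_le_compat_l. lra. nra. }
      assert (H' : A*a + b t*cc + G*RR = (1-eta)*(A*a+b t*cc) + G*RR + eta*(A*a+b t*cc)) by ring. lra.
    - change (z1 (S t) ^ 2 + z2 (S t) ^ 2) with cc. rewrite HE. assert (0 <= eta * (A * a)) by (apply Rmult_le_pos; nra).
      assert (H' : A*a + b t*cc + G*RR = (1-eta)*(A*a+b t*cc) + G*RR + eta*(A*a) + eta*b t*cc) by ring. lra. }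
  set (eps := fun t => Cb / eta * c t).
  assert (Heps0 : forall t, 0 <= eps t).
  { intros t. unfold eps, c. pose proof (Hbpos (S t)).
    pose proof (Rabs_pos (b (S t) ^ 2 / (b t * b (S (S t))) - 1)).
    pose proof (Rabs_pos (rho (S (S t)) - rho (S t))). pose proof (Rabs_pos s).
    pose proof (Rabs_pos (g 0%nat / b 0%nat)). pose proof (HBrho 0%nat).
    assert (0 <= s ^ 2 * / b (S t)) by (apply Rmult_le_pos; [apply pow2_ge_0| left; apply Rinv_0_lt_compat; lra]).
    assert (0 <= 2 * Rabs s * / b (S t)) by (apply Rmult_le_pos; [lra| left; apply Rinv_0_lt_compat; lra]).
    apply Rmult_le_pos. apply Rdiv_le_0_compat; lra.
    assert (0 <= (Brho * Cb + 1) * Rabs (rho (S (S t)) - rho (S t))) by (apply Rmult_le_pos; nra).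
    lra. }
  assert (Hgrow : forall t, (T0 <= t)%nat -> E (S t) <= E t * (1 + eps t)).
  { intros t Ht. destruct (Hlow t Ht) as [HL1 _].
    pose proof (Hstep t). pose proof (HDc t). pose proof (Hbpos t).
    assert (HNn : 0 <= Nn t) by (unfold Nn; nra).
    assert (HDn : 0 <= D t) by (unfold D; pose proof (Rabs_pos (b (S t) ^ 2 / b (S (S t)) - b t + s ^ 2 / b (S t) + g (S t) * (rho (S t) - rho (S (S t))))); pose proof (Rabs_pos (b t * (rho (S t) - rho (S (S t))))); pose proof (Rabs_pos (2 * b t * s / b (S t))); lra).
    assert (E (S t) <= E t + D t * Nn t) by (pose proof (Rle_abs (E (S t) - E t)); lra).
    assert (D t * Nn t <= (D t / b t) * (Cb / eta) * E t).
    { apply Rle_trans with ((D t / b t) * (Cb / eta) * (eta * (b t / Cb) * Nn t)).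
      right. field. repeat split; apply Rgt_not_eq; lra.
      apply Rmult_le_compat_l; auto. apply Rmult_le_pos. apply Rdiv_le_0_compat; lra. apply Rdiv_le_0_compat; lra. }
    assert (0 <= E t) by (assert (0 <= eta * (b t / Cb) * Nn t) by (apply Rmult_le_pos; [apply Rmult_le_pos; [lra|apply Rdiv_le_0_compat; lra]|auto]); lra).
    assert ((D t / b t) * (Cb / eta) * E t <= c t * (Cb / eta) * E t).
    { apply Rmult_le_compat_r; auto. apply Rmult_le_compat_r; auto. apply Rdiv_le_0_compat; lra. }
    unfold eps. nra. }
  destruct (summable_abs _ (summable_scal (Cb / eta) _ Hc)) as [Me HMe].
  assert (HMe' : forall n, ssum eps n <= Me).
  { intros n. specialize (HMe n). rewrite (ssum_ext _ eps) in HMe. auto.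
    intros t. rewrite Rabs_Rabsolu. rewrite Rabs_right. reflexivity. apply Rle_ge; apply Heps0. }
  assert (HET0 : 0 <= E T0).
  { destruct (Hlow T0 (le_n _)) as [H _]. pose proof (Hbpos T0).
    assert (0 <= Nn T0) by (unfold Nn; nra).
    assert (0 <= eta * (b T0 / Cb) * Nn T0) by (apply Rmult_le_pos; [apply Rmult_le_pos; [lra|apply Rdiv_le_0_compat; lra]|auto]). lra. }
  assert (Hind : forall d, E (T0 + d)%nat <= E T0 * exp (ssum eps (T0 + d) - ssum eps T0)).
  { induction d.
    - rewrite Nat.add_0_r. replace (ssum eps T0 - ssum eps T0) with 0 by ring. rewrite exp_0. lra.
    - replace (T0 + S d)%nat with (S (T0 + d)) by lia.
      pose proof (Hgrow (T0 + d)%nat ltac:(lia)).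
      assert (0 <= E (T0 + d)%nat).
      { destruct (Hlow (T0 + d)%nat ltac:(lia)) as [H1 _]. pose proof (Hbpos (T0 + d)%nat).
        assert (0 <= Nn (T0 + d)%nat) by (unfold Nn; nra).
        assert (0 <= eta * (b (T0 + d)%nat / Cb) * Nn (T0 + d)%nat) by (apply Rmult_le_pos; [apply Rmult_le_pos; [lra|apply Rdiv_le_0_compat; lra]|auto]). lra. }
      pose proof (exp_ineq1_le (eps (T0 + d)%nat)).
      simpl ssum. replace (ssum eps (T0 + d) + eps (T0 + d)%nat - ssum eps T0) with ((ssum eps (T0 + d) - ssum eps T0) + eps (T0 + d)%nat) by ring.
      rewrite exp_plus.
      apply Rle_trans with (E (T0 + d)%nat * exp (eps (T0 + d)%nat)).
      eapply Rle_trans. exact H. apply Rmult_le_compat_l; auto.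
      rewrite <- Rmult_assoc. apply Rmult_le_compat_r. left; apply exp_pos. auto. }
  exists (E T0 * exp Me / eta).
  intros t Ht. destruct (Hlow t Ht) as [_ H2].
  pose proof (Hbpos t).
  replace t with (T0 + (t - T0))%nat in H2 by lia.
  pose proof (Hind (t - T0)%nat).
  assert (ssum eps (T0 + (t - T0)) - ssum eps T0 <= Me).
  { pose proof (HMe' (T0 + (t - T0))%nat). pose proof (ssum_nonneg eps T0 Heps0). lra. }
  assert (E (T0 + (t - T0))%nat <= E T0 * exp Me).
  { eapply Rle_trans. exact H0. apply Rmult_le_compat_l; auto. apply exp_le_mono; auto. }
  replace (T0 + (t - T0))%nat with t in * by lia.
  apply (Rmult_le_reg_l (eta * b t)). nra.
  replace (eta * b t * (E T0 * exp Me / eta / b t)) with (E T0 * exp Me) by (field; lra).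
  lra.
Qed.

Ltac ceq := apply injective_projections; simpl; ring.

Fixpoint Pa (q x : nat) : R :=
  match q with O => 1 | S q => sqrt (INR (S x)) * Pa q (S x) end.
Fixpoint Pd (p n : nat) : R :=
  match p with O => 1 | S p => match n with O => 0 | S n' => sqrt (INR (S n')) * Pd p n' end end.

Lemma iter_a q psi n : Nat.iter q op_a psi n = Cmult (RtoC (Pa q n)) (psi (n + q)%nat).
Proof.
  revert n; induction q; intros n; simpl.
  - rewrite Nat.add_0_r. ceq.
  - unfold op_a. rewrite IHq. replace (S n + q)%nat with (n + S q)%nat by lia.
    unfold RtoC, Cmult; simpl. apply injective_projections; simpl; ring.
Qed.

Lemma iter_adag p chi n : Nat.iter p op_adag chi n = Cmult (RtoC (Pd p n)) (chi (n - p)%nat).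
Proof.
  revert n; induction p; intros n; simpl.
  - rewrite Nat.sub_0_r. ceq.
  - unfold op_adag. destruct n.
    + ceq.
    + rewrite IHp. simpl. unfold RtoC, Cmult; simpl. apply injective_projections; simpl; ring.
Qed.

Lemma mono_eq p q psi n : mono p q psi n = Cmult (RtoC (Pd p n * Pa q (n - p))) (psi (n - p + q)%nat).
Proof.
  unfold mono. rewrite iter_adag, iter_a. unfold RtoC, Cmult; simpl. apply injective_projections; simpl; ring.
Qed.

Lemma Pd_zero p n : (n < p)%nat -> Pd p n = 0.
Proof. revert n; induction p; intros n H. lia. destruct n. reflexivity. simpl. rewrite IHp by lia. ring. Qed.

Lemma Pa_pos q x : 0 < Pa q x.
Proof. revert x; induction q; intros x. simpl; lra. change (Pa (S q) x) with (sqrt (INR (S x)) * Pa q (S x)). apply Rmult_lt_0_compat; auto. apply sqrt_lt_R0. apply lt_0_INR; lia. Qed.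

Lemma Pd_pos p n : (p <= n)%nat -> 0 < Pd p n.
Proof. revert n; induction p; intros n H. simpl; lra. destruct n. lia. change (Pd (S p) (S n)) with (sqrt (INR (S n)) * Pd p n).
  apply Rmult_lt_0_compat. apply sqrt_lt_R0. apply lt_0_INR; lia. apply IHp; lia. Qed.

Lemma Pa_last q x : Pa (S q) x = Pa q x * sqrt (INR (x + S q)).
Proof.
  revert x; induction q; intros x.
  - rewrite Nat.add_1_r. cbn [Pa]. ring.
  - change (Pa (S (S q)) x) with (sqrt (INR (S x)) * Pa (S q) (S x)). rewrite IHq.
    replace (S x + S q)%nat with (x + S (S q))%nat by lia. cbn [Pa]. ring.
Qed.

Lemma Pd_Pa q x : Pd q (x + q) = Pa q x.
Proof.
  induction q. reflexivity.
  rewrite Pa_last, <- IHq. replace (x + S q)%nat with (S (x + q)) by lia. cbn [Pd]. ring.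
Qed.

Section Coup.
Variables k l : nat.
Definition bc (j : nat) : R := Pd l j * Pa k (j - l).

Lemma mono_lk psi n : (l <= k)%nat -> mono l k psi n = Cmult (RtoC (bc n)) (psi (n + (k - l))%nat).
Proof.
  intros Hlk. rewrite mono_eq. unfold bc. destruct (le_lt_dec l n).
  - replace (n - l + k)%nat with (n + (k - l))%nat by lia. reflexivity.
  - rewrite Pd_zero by auto. unfold RtoC, Cmult; apply injective_projections; simpl; ring.
Qed.

Lemma mono_kl psi n : (l <= k)%nat ->
  mono k l psi n = Cmult (RtoC (if (k - l <=? n)%nat then bc (n - (k - l)) else 0)) (psi (n - (k - l))%nat).
Proof.
  intros Hlk. rewrite mono_eq. destruct (le_lt_dec k n).
  - assert (Hb : (k - l <=? n)%nat = true) by (apply Nat.leb_le; lia). rewrite Hb.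
    replace (n - k + l)%nat with (n - (k - l))%nat by lia. f_equal. f_equal.
    unfold bc. replace n with ((n - k) + k)%nat at 1 by lia. rewrite Pd_Pa.
    replace (n - (k - l))%nat with ((n - k) + l)%nat by lia. rewrite Pd_Pa.
    replace (n - k + l - l)%nat with (n - k)%nat by lia. ring.
  - rewrite Pd_zero by auto. destruct (k - l <=? n)%nat eqn:E.
    + apply Nat.leb_le in E. unfold bc. rewrite (Pd_zero l (n - (k - l))) by lia.
      unfold RtoC, Cmult; apply injective_projections; simpl; ring.
    + unfold RtoC, Cmult; apply injective_projections; simpl; ring.
Qed.

Lemma bc_zero j : (j < l)%nat -> bc j = 0.
Proof. intros; unfold bc; rewrite Pd_zero; auto; ring. Qed.
Lemma bc_pos j : (l <= j)%nat -> 0 < bc j.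
Proof. intros; unfold bc. apply Rmult_lt_0_compat. apply Pd_pos; auto. apply Pa_pos. Qed.
End Coup.

Definition prodF (cs : list R) (F : R -> R) : R := fold_right (fun c acc => F c * acc) 1 cs.

Lemma prodF_app A B F : prodF (A ++ B) F = prodF A F * prodF B F.
Proof. induction A; simpl. ring. unfold prodF in *; simpl. rewrite IHA. ring. Qed.

Lemma prodF_map {T} (g : T -> R) (L : list T) F :
  prodF (map g L) F = fold_right (fun c acc => F (g c) * acc) 1 L.
Proof. induction L; simpl; auto. unfold prodF in *; simpl. rewrite IHL. auto. Qed.

Lemma prodF_ext cs F G : (forall c, In c cs -> F c = G c) -> prodF cs F = prodF cs G.
Proof. induction cs; intros H; simpl; auto. unfold prodF in *; simpl. rewrite H by (left; auto).
  rewrite IHcs; auto. intros; apply H; right; auto. Qed.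

Lemma prodF_mult cs F G : prodF cs (fun c => F c * G c) = prodF cs F * prodF cs G.
Proof. induction cs; simpl. unfold prodF; simpl; ring. unfold prodF in *; simpl. rewrite IHcs. ring. Qed.

Lemma prodF_const cs a : prodF cs (fun _ => a) = a ^ length cs.
Proof. induction cs; simpl. reflexivity. unfold prodF in *; simpl. rewrite IHcs. ring. Qed.

Lemma prodF_pos cs F : (forall c, In c cs -> 0 < F c) -> 0 < prodF cs F.
Proof. induction cs; intros H; unfold prodF in *; simpl. lra.
  apply Rmult_lt_0_compat. apply H; left; auto. apply IHcs. intros; apply H; right; auto. Qed.

Lemma prodF_le cs F G : (forall c, In c cs -> 0 <= F c <= G c) -> prodF cs F <= prodF cs G.
Proof. induction cs; intros H; unfold prodF in *; simpl. lra.
  assert (0 <= fold_right (fun c acc => F c * acc) 1 cs).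
  { assert (H' : forall c, In c cs -> 0 <= F c) by (intros c Hc; apply H; right; auto).
    clear IHcs H. induction cs; simpl. lra. apply Rmult_le_pos. apply H'; left; auto.
    apply IHcs. intros; apply H'; right; auto. }
  apply Rmult_le_compat. apply H; left; auto. auto. apply H; left; auto.
  apply IHcs. intros; apply H; right; auto. Qed.

Lemma BV_prodF cs (F : R -> nat -> R) : (forall c, In c cs -> BV (F c)) ->
  BV (fun t => prodF cs (fun c => F c t)).
Proof. induction cs; intros H; unfold prodF in *; simpl. apply BV_const.
  apply BV_mult. apply H; left; auto. apply IHcs. intros; apply H; right; auto. Qed.

Lemma fold_map_S (G : nat -> R) L :
  fold_right (fun c acc => G c * acc) 1 (map S L) = fold_right (fun c acc => G (S c) * acc) 1 L.
Proof. induction L; simpl; auto. rewrite IHL; auto. Qed.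

Lemma fold_seq_S (G : nat -> R) s q :
  fold_right (fun c acc => G c * acc) 1 (seq (S s) q) = fold_right (fun c acc => G (S c) * acc) 1 (seq s q).
Proof. rewrite <- seq_shift. apply fold_map_S. Qed.

Lemma fold_ext (G H : nat -> R) L : (forall c, G c = H c) ->
  fold_right (fun c acc => G c * acc) 1 L = fold_right (fun c acc => H c * acc) 1 L.
Proof. intros E; induction L; simpl; auto. rewrite IHL, E; auto. Qed.

Lemma Pd_sq p n : (p <= n)%nat -> Pd p n ^ 2 = prodF (map INR (seq 0 p)) (fun c => INR n - c).
Proof.
  revert n; induction p; intros n H. simpl. unfold prodF; simpl; ring.
  destruct n. lia. change (Pd (S p) (S n)) with (sqrt (INR (S n)) * Pd p n).
  rewrite Rpow_mult_distr. rewrite IHp by lia. rewrite pow2_sqrt by apply pos_INR.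
  rewrite !prodF_map. simpl seq. rewrite <- seq_shift. cbn [fold_right].
  rewrite fold_map_S. replace (INR (S n) - INR 0) with (INR (S n)) by (simpl; ring). f_equal.
  clear. induction (seq 0 p) as [|a L IHL]; cbn [fold_right]; auto. rewrite IHL. f_equal. rewrite !S_INR. ring.
Qed.

Lemma Pa_sq q x : Pa q x ^ 2 = prodF (map INR (seq 1 q)) (fun c => INR x + c).
Proof.
  revert x; induction q; intros x. simpl. unfold prodF; simpl; ring.
  change (Pa (S q) x) with (sqrt (INR (S x)) * Pa q (S x)).
  rewrite Rpow_mult_distr. rewrite IHq. rewrite pow2_sqrt by apply pos_INR.
  rewrite !prodF_map. simpl seq. rewrite <- seq_shift. cbn [fold_right].
  rewrite fold_map_S. replace (INR x + INR 1) with (INR (S x)) by (rewrite S_INR; simpl; ring). f_equal.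
  rewrite !fold_seq_S. apply fold_ext. intros c. rewrite !S_INR. ring.
Qed.

Section BsqS.
Variables k l : nat.
Definition cs : list R := map INR (seq 0 l) ++ map (fun i => INR l - INR i) (seq 1 k).
Definition Bsq (x : R) : R := prodF cs (fun c => x - c).

Lemma cs_len : length cs = (l + k)%nat.
Proof. unfold cs. rewrite length_app, !length_map, !length_seq. auto. Qed.

Lemma cs_bound c : In c cs -> c <= INR l - 1.
Proof.
  unfold cs. intros H. apply in_app_or in H. destruct H as [H|H]; apply in_map_iff in H; destruct H as [i [<- Hi]];
  apply in_seq in Hi.
  - assert (i + 1 <= l)%nat by lia. apply le_INR in H. rewrite plus_INR in H. simpl in H. lra.
  - assert (1 <= i)%nat by lia. apply le_INR in H. simpl in H. lra.
Qed.

Lemma bc_sq j : (l <= j)%nat -> bc k l j ^ 2 = Bsq (INR j).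
Proof.
  intros H. unfold bc, Bsq, cs. rewrite Rpow_mult_distr. rewrite Pd_sq by auto. rewrite Pa_sq.
  rewrite prodF_app. f_equal. rewrite !prodF_map. clear -H. induction (seq 1 k); simpl; auto.
  rewrite IHl0. f_equal. rewrite minus_INR by auto. ring.
Qed.

Lemma Bsq_ge1 x : INR l <= x -> 1 <= Bsq x.
Proof.
  intros H. unfold Bsq. rewrite <- (pow1 (length cs)). rewrite <- prodF_const.
  apply prodF_le. intros c Hc. apply cs_bound in Hc. lra.
Qed.

Lemma Bsq_pos x : INR l <= x -> 0 < Bsq x.
Proof. intros H; pose proof (Bsq_ge1 x H); lra. Qed.

Lemma Bsq_lower x : INR l <= x -> (x - INR l + 1) ^ (l + k) <= Bsq x.
Proof.
  intros H. unfold Bsq. rewrite <- cs_len. rewrite <- prodF_const.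
  apply prodF_le. intros c Hc. apply cs_bound in Hc. lra.
Qed.

Lemma Bsq_step_up x M : INR l <= x -> 0 <= M -> Bsq (x + M) <= (1 + M) ^ (l + k) * Bsq x.
Proof.
  intros H HM. unfold Bsq. rewrite <- cs_len. rewrite <- prodF_const. rewrite <- prodF_mult.
  apply prodF_le. intros c Hc. apply cs_bound in Hc. split. lra. nra.
Qed.

Lemma Bsq_mono x M : INR l <= x -> 0 <= M -> Bsq x <= Bsq (x + M).
Proof.
  intros H HM. unfold Bsq. apply prodF_le. intros c Hc. apply cs_bound in Hc. lra.
Qed.

Lemma Bsq_ratio x M : INR l <= x -> Bsq (x + M) = Bsq x * prodF cs (fun c => 1 + M / (x - c)).
Proof.
  intros H. unfold Bsq. rewrite <- prodF_mult. apply prodF_ext. intros c Hc. apply cs_bound in Hc.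
  field. lra.
Qed.

Lemma Bsq_norm x : 0 < x -> Bsq x = x ^ (l + k) * prodF cs (fun c => 1 - c / x).
Proof.
  intros H. unfold Bsq. rewrite <- cs_len, <- prodF_const, <- prodF_mult. apply prodF_ext.
  intros c _. field. lra.
Qed.

Lemma normprod_lower x : INR l + 1 <= x -> (/ (INR l + 1)) ^ (l + k) <= prodF cs (fun c => 1 - c / x).
Proof.
  intros H. rewrite <- cs_len, <- prodF_const. apply prodF_le. intros c Hc. apply cs_bound in Hc.
  pose proof (pos_INR l).
  split. left; apply Rinv_0_lt_compat; lra.
  assert (c / x <= INR l / x).
  { unfold Rdiv. apply Rmult_le_compat_r. left; apply Rinv_0_lt_compat; lra. lra. }
  assert (INR l / x <= INR l / (INR l + 1)).
  { unfold Rdiv. apply Rmult_le_compat_l. auto. apply Rinv_le_contravar; lra. }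
  assert (1 - INR l / (INR l + 1) = / (INR l + 1)) by (field; lra). lra.
Qed.
End BsqS.

Lemma Rpower_pos' x e : 0 < Rpower x e.
Proof. unfold Rpower. apply exp_pos. Qed.

Lemma Rpower_mono_neg x y e : 0 < x <= y -> e <= 0 -> Rpower y e <= Rpower x e.
Proof.
  intros [Hx Hxy] He. unfold Rpower. apply exp_le_mono.
  assert (ln x <= ln y). { destruct Hxy. left; apply ln_increasing; lra. subst; lra. }
  nra.
Qed.

Lemma Rp_sq x q : 0 < x -> Rpower x (- INR q / 2) ^ 2 = / x ^ q.
Proof.
  intros Hx. simpl. rewrite Rmult_1_r. rewrite <- Rpower_plus.
  replace (- INR q / 2 + - INR q / 2) with (- INR q) by field.
  rewrite Rpower_Ropp, Rpower_pow; auto.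
Qed.

Lemma Rp_half x : 0 < x -> Rpower x (- INR 1 / 2) = / sqrt x.
Proof. intros Hx. replace (- INR 1 / 2) with (- / 2) by (simpl; field).
  rewrite Rpower_Ropp, Rpower_sqrt; auto. Qed.

Lemma Rp_32 x : 0 < x -> Rpower x (- INR (2 + 1) / 2) = / (x * sqrt x).
Proof. intros Hx. replace (- INR (2 + 1) / 2) with (- (1 + / 2)) by (simpl; field).
  rewrite Rpower_Ropp, Rpower_plus, Rpower_sqrt, Rpower_1; auto. Qed.

Lemma Rp_zero x : Rpower x (- INR 0 / 2) = 1.
Proof. replace (- INR 0 / 2) with 0 by (simpl; field). unfold Rpower. rewrite Rmult_0_l. apply exp_0. Qed.

Lemma archi A : exists T : nat, A <= INR T.
Proof. destruct (INR_archimed 1 A) as [n Hn]. lra. exists n. lra. Qed.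

Section Seq.
Variable x : nat -> R.
Hypothesis Hx1 : forall t, INR t + 1 <= x t.
Hypothesis Hxinc : forall t, x t <= x (S t).

Lemma x_pos t : 0 < x t.
Proof. pose proof (Hx1 t); pose proof (pos_INR t); lra. Qed.

Lemma summable_R32 : summable (fun t => Rpower (x t) (- INR (2 + 1) / 2)).
Proof.
  eapply summable_le; [|exact (summable_abs _ Z32)].
  intros t. rewrite Rabs_right by (apply Rle_ge, Rlt_le, Rpower_pos').
  rewrite Rp_32 by apply x_pos. pose proof (pos_INR t). pose proof (Hx1 t).
  assert (0 < (INR t + 1) * sqrt (INR t + 1)) by (apply Rmult_lt_0_compat; [lra|apply sqrt_lt_R0; lra]).
  rewrite Rabs_right by (left; apply Rinv_0_lt_compat; auto).
  apply Rinv_le_contravar; auto. apply Rmult_le_compat; try lra. apply sqrt_pos.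
  apply sqrt_le_1_alt; lra.
Qed.

Lemma BV_Rpow e : e <= 0 -> BV (fun t => Rpower (x t) e).
Proof.
  intros He. apply BV_mono_dec.
  - intros t. apply Rpower_mono_neg; auto. split; [apply x_pos| apply Hxinc].
  - intros t; left; apply Rpower_pos'.
Qed.

Lemma BV_inv_x (c : R) : (forall t, c < x t) -> BV (fun t => / (x t - c)).
Proof.
  intros Hc. apply BV_mono_dec.
  - intros t. apply Rinv_le_contravar. specialize (Hc t); lra. specialize (Hxinc t); lra.
  - intros t. left; apply Rinv_0_lt_compat. specialize (Hc t); lra.
Qed.

Lemma BV_asym_poly (lam : nat -> R) N :
  BV (fun t => sum_f_R0 (fun s => lam s * Rpower (x t) (- INR s / 2)) N).
Proof.
  induction N; cbn [sum_f_R0].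
  - apply BV_scal. apply BV_Rpow. pose proof (pos_INR 0); lra.
  - apply BV_plus; auto. apply BV_scal. apply BV_Rpow. pose proof (pos_INR (S N)). lra.
Qed.

Lemma BV_from_asym (phi : nat -> R) (lam : nat -> R) (C : R) (T : nat) :
  (forall t, (T <= t)%nat -> Rabs (phi t - sum_f_R0 (fun s => lam s * Rpower (x t) (- INR s / 2)) 2)
                          <= C * Rpower (x t) (- INR (2 + 1) / 2)) ->
  BV phi.
Proof.
  intros H.
  set (P := fun t => sum_f_R0 (fun s => lam s * Rpower (x t) (- INR s / 2)) 2).
  assert (BV (fun t => P t + (phi t - P t))).
  { apply BV_plus. apply BV_asym_poly.
    unfold BV. apply summable_le_ev with (T0 := T)
      (c := fun t => C * Rpower (x (S t)) (- INR (2 + 1) / 2) + C * Rpower (x t) (- INR (2 + 1) / 2)).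
    - intros t Ht. pose proof (H t Ht). pose proof (H (S t) ltac:(lia)). unfold P.
      eapply Rle_trans. 2:{ apply Rplus_le_compat; [exact H1| exact H0]. }
      replace (phi (S t) - sum_f_R0 (fun s : nat => lam s * Rpower (x (S t)) (- INR s / 2)) 2 -
        (phi t - sum_f_R0 (fun s : nat => lam s * Rpower (x t) (- INR s / 2)) 2)) with
        ((phi (S t) - sum_f_R0 (fun s : nat => lam s * Rpower (x (S t)) (- INR s / 2)) 2) +
        - (phi t - sum_f_R0 (fun s : nat => lam s * Rpower (x t) (- INR s / 2)) 2)) by ring.
      eapply Rle_trans. apply Rabs_triang. rewrite Rabs_Ropp. lra.
    - apply summable_plus; apply summable_scal.
      apply (summable_unshift (fun t => Rpower (x t) (- INR (2 + 1) / 2))). apply summable_R32.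
      apply summable_R32. }
  eapply summable_le; [|apply summable_abs; exact H0]. intros t. simpl.
  replace (P (S t) + (phi (S t) - P (S t)) - (P t + (phi t - P t))) with (phi (S t) - phi t) by ring. lra.
Qed.
End Seq.

Section Class.
Variables (k l : nat) (f : nat -> R) (sg : R) (r : nat).
Hypothesis Hlk : (l < k)%nat.
Hypothesis H3 : (3 <= k + l)%nat.

Definition jj t := (l + r + t * (k - l))%nat.
Definition bb t := bc k l (jj t).
Definition hh t : C := (f (jj t), sg).

Fixpoint Ypair (t : nat) : C * C :=
  match t with
  | O => (RtoC 1, Cmult (RtoC (- / bb 0)) (hh 0))
  | S t => let (y0, y1) := Ypair t in
           (y1, Cmult (RtoC (- / bb (S t))) (Cplus (Cmult (RtoC (bb t)) y0) (Cmult (hh (S t)) y1)))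
  end.
Definition Y t := fst (Ypair t).

Lemma jj_S t : jj (S t) = (jj t + (k - l))%nat.
Proof. unfold jj. simpl. lia. Qed.

Lemma jj_ge t : (l <= jj t)%nat.
Proof. unfold jj. lia. Qed.

Lemma bb_pos t : 0 < bb t.
Proof. unfold bb. apply bc_pos. apply jj_ge. Qed.

Lemma Y_snd t : snd (Ypair t) = Y (S t).
Proof. unfold Y. simpl. destruct (Ypair t). reflexivity. Qed.

Lemma Y_0 : Y 0 = RtoC 1.
Proof. reflexivity. Qed.

Lemma Y_rec0 : Cplus (Cmult (RtoC (bb 0)) (Y 1)) (Cmult (hh 0) (Y 0)) = RtoC 0.
Proof.
  unfold Y. simpl. pose proof (bb_pos 0).
  unfold Cmult, Cplus, RtoC; simpl. apply injective_projections; simpl; field; lra.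
Qed.

Lemma Y_rec t : Cplus (Cmult (RtoC (bb (S t))) (Y (S (S t))))
                  (Cplus (Cmult (RtoC (bb t)) (Y t)) (Cmult (hh (S t)) (Y (S t)))) = RtoC 0.
Proof.
  pose proof (bb_pos (S t)).
  assert (E : Y (S (S t)) = Cmult (RtoC (- / bb (S t))) (Cplus (Cmult (RtoC (bb t)) (Y t)) (Cmult (hh (S t)) (Y (S t))))).
  { unfold Y at 1. simpl. rewrite <- Y_snd. unfold Y. destruct (Ypair t). reflexivity. }
  rewrite E. destruct (Y t) as [a1 a2]. destruct (Y (S t)) as [c1 c2]. unfold hh.
  unfold Cmult, Cplus, RtoC; simpl. apply injective_projections; simpl; field; lra.
Qed.

Definition xx t := INR (jj (S t)).

Lemma xx_S t : xx (S t) = xx t + INR (k - l).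
Proof. unfold xx. rewrite (jj_S (S t)). rewrite plus_INR. auto. Qed.

Lemma xx_ge_t t : INR t + 2 <= xx t - INR l + 1.
Proof.
  unfold xx, jj. rewrite !plus_INR, mult_INR. rewrite S_INR.
  assert (1 <= INR (k - l)) by (apply (le_INR 1); lia). pose proof (pos_INR r). pose proof (pos_INR t).
  nra.
Qed.

Lemma xx_ge_l t : INR l + 1 <= xx t.
Proof. pose proof (xx_ge_t t). pose proof (pos_INR t). lra. Qed.

Lemma xx_ge1 t : INR t + 1 <= xx t.
Proof. pose proof (xx_ge_t t). pose proof (pos_INR l). lra. Qed.

Lemma xx_inc t : xx t <= xx (S t).
Proof. rewrite xx_S. pose proof (pos_INR (k - l)). lra. Qed.

Lemma bb_sqrt t : bb (S t) = sqrt (Bsq k l (xx t)).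
Proof.
  unfold bb, xx. rewrite <- bc_sq by apply jj_ge. rewrite sqrt_pow2; auto.
  left. apply bc_pos, jj_ge.
Qed.

Lemma Bsq_xx_ge1 t : 1 <= Bsq k l (xx t).
Proof. apply Bsq_ge1. pose proof (xx_ge_l t); lra. Qed.

Lemma bbS_ge1 t : 1 <= bb (S t).
Proof. rewrite bb_sqrt. rewrite <- sqrt_1. apply sqrt_le_1_alt. apply Bsq_xx_ge1. Qed.

Definition Cb := (1 + INR (k - l)) ^ (l + k).

Lemma Cb_ge1 : 1 <= Cb.
Proof. unfold Cb. apply pow_R1_Rle. pose proof (pos_INR (k - l)); lra. Qed.

Lemma bb_step t : bb (S (S t)) <= Cb * bb (S t).
Proof.
  rewrite !bb_sqrt. rewrite xx_S.
  pose proof (Bsq_step_up k l (xx t) (INR (k - l)) ltac:(pose proof (xx_ge_l t); lra) (pos_INR _)).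
  fold Cb in H. pose proof Cb_ge1. pose proof (Bsq_xx_ge1 t).
  rewrite <- (sqrt_pow2 Cb) by lra. rewrite <- sqrt_mult.
  apply sqrt_le_1_alt. assert (Cb * Bsq k l (xx t) <= Cb ^ 2 * Bsq k l (xx t)).
  { apply Rmult_le_compat_r. lra. simpl. nra. } lra.
  apply pow2_ge_0. lra.
Qed.

Lemma summable_inv_bb : summable (fun t => / bb (S t)).
Proof.
  eapply summable_le; [|exact (summable_abs _ Z32)].
  intros t. pose proof (bbS_ge1 t). rewrite Rabs_right by (left; apply Rinv_0_lt_compat; lra).
  pose proof (pos_INR t).
  assert (Hp : 0 < (INR t + 1) * sqrt (INR t + 1)) by (apply Rmult_lt_0_compat; [lra|apply sqrt_lt_R0; lra]).
  rewrite Rabs_right by (left; apply Rinv_0_lt_compat; auto).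
  apply Rinv_le_contravar; auto.
  rewrite bb_sqrt.
  pose proof (xx_ge_t t). pose proof (xx_ge_l t).
  pose proof (Bsq_lower k l (xx t) ltac:(lra)).
  assert (((INR t + 1) * sqrt (INR t + 1)) ^ 2 <= Bsq k l (xx t)).
  { rewrite Rpow_mult_distr, pow2_sqrt by lra.
    apply Rle_trans with ((xx t - INR l + 1) ^ (l + k)); auto.
    apply Rle_trans with ((xx t - INR l + 1) ^ 3).
    - replace ((INR t + 1) ^ 2 * (INR t + 1)) with ((INR t + 1) ^ 3) by ring.
      apply pow_incr. lra.
    - replace (l + k)%nat with (3 + (l + k - 3))%nat by lia. rewrite pow_add.
      assert (1 <= (xx t - INR l + 1) ^ (l + k - 3)) by (apply pow_R1_Rle; lra).
      assert (0 <= (xx t - INR l + 1) ^ 3) by (apply pow_le; lra). nra. }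
  rewrite <- (sqrt_pow2 ((INR t + 1) * sqrt (INR t + 1))) by lra.
  apply sqrt_le_1_alt. auto.
Qed.

Lemma summable_ratio :
  summable (fun t => bb (S (S t)) ^ 2 / (bb (S t) * bb (S (S (S t)))) - 1).
Proof.
  set (M := INR (k - l)).
  set (Qf := fun t => prodF (cs k l) (fun c => 1 + M * / (xx t - c))).
  assert (HQ1 : forall t, 1 <= Qf t).
  { intros t. unfold Qf. apply Rle_trans with (prodF (cs k l) (fun _ => 1)).
    rewrite prodF_const, pow1; lra. apply prodF_le.
    intros c Hc. apply cs_bound in Hc. pose proof (xx_ge_l t). cbv beta. split. lra.
    assert (0 <= M * / (xx t - c)). { apply Rmult_le_pos. unfold M; apply pos_INR. left; apply Rinv_0_lt_compat; lra. } lra. }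
  assert (Hq : forall t, bb (S (S t)) / bb (S t) = sqrt (Qf t)).
  { intros t. rewrite !bb_sqrt. rewrite xx_S. pose proof (xx_ge_l t).
    rewrite (Bsq_ratio k l (xx t) (INR (k - l))) by lra.
    pose proof (Bsq_xx_ge1 t).
    assert (HP : prodF (cs k l) (fun c => 1 + INR (k - l) / (xx t - c)) = Qf t).
    { unfold Qf. apply prodF_ext. intros c Hc. unfold Rdiv, M. auto. }
    rewrite HP. pose proof (HQ1 t).
    rewrite sqrt_mult by lra.
    field. apply Rgt_not_eq. apply sqrt_lt_R0. lra. }
  assert (HBVq : BV (fun t => sqrt (Qf t))).
  { apply BV_sqrt with (c := 1). lra. auto. unfold Qf. apply BV_prodF. intros c Hc.
    apply BV_plus. apply BV_const. apply BV_scal. apply cs_bound in Hc.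
    apply BV_inv_x. apply xx_inc. intros t. pose proof (xx_ge_l t). lra. }
  eapply summable_le; [|exact (summable_abs _ HBVq)].
  intros t. cbv beta.
  pose proof (bbS_ge1 t). pose proof (bbS_ge1 (S t)). pose proof (bbS_ge1 (S (S t))).
  assert (Ht : bb (S (S t)) ^ 2 / (bb (S t) * bb (S (S (S t)))) - 1 =
     (sqrt (Qf t) - sqrt (Qf (S t))) / sqrt (Qf (S t))).
  { rewrite <- !Hq. field. lra. }
  rewrite Ht. unfold Rdiv. rewrite Rabs_mult.
  assert (1 <= sqrt (Qf (S t))) by (rewrite <- sqrt_1; apply sqrt_le_1_alt; auto).
  rewrite (Rabs_right (/ sqrt (Qf (S t)))) by (left; apply Rinv_0_lt_compat; lra).
  rewrite <- Rabs_Ropp. replace (- (sqrt (Qf t) - sqrt (Qf (S t)))) with (sqrt (Qf (S t)) - sqrt (Qf t)) by ring.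
  rewrite <- (Rmult_1_r (Rabs (sqrt (Qf (S t)) - sqrt (Qf t)))) at 2.
  apply Rmult_le_compat_l. apply Rabs_pos. rewrite <- Rinv_1. apply Rinv_le_contravar; lra.
Qed.

Definition chi t := prodF (cs k l) (fun c => 1 - c / xx t).
Definition Lchi := (/ (INR l + 1)) ^ (l + k).

Lemma Lchi_pos : 0 < Lchi.
Proof. unfold Lchi. apply pow_lt. apply Rinv_0_lt_compat. pose proof (pos_INR l); lra. Qed.

Lemma chi_lower t : Lchi <= chi t.
Proof. apply normprod_lower. apply xx_ge_l. Qed.

Lemma BV_chi : BV chi.
Proof.
  unfold chi. apply BV_prodF. intros c Hc.
  assert (BV (fun t => / (xx t - 0))).
  { apply BV_inv_x. apply xx_inc. intros t; pose proof (xx_ge1 t); pose proof (pos_INR t); lra. }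
  apply BV_plus. apply BV_const.
  eapply summable_le; [|apply summable_abs; exact (BV_scal (- c) _ H)].
  intros t. simpl. right. f_equal. unfold Rdiv. rewrite !Rminus_0_r. ring.
Qed.

Definition phi t := f (jj (S t)) * Rpower (xx t) (- INR (k + l) / 2).

Lemma rho_eq t : f (jj (S t)) / bb (S t) = phi t * / sqrt (chi t).
Proof.
  pose proof (xx_ge1 t). pose proof (pos_INR t).
  assert (Hx : 0 < xx t) by lra.
  assert (Hc : Rpower (xx t) (- INR (k + l) / 2) ^ 2 * Bsq k l (xx t) = chi t).
  { rewrite Rp_sq by auto. rewrite Bsq_norm by auto. unfold chi. rewrite (Nat.add_comm k l).
    field. apply pow_nonzero. lra. }
  rewrite <- Hc. rewrite sqrt_mult by (try apply pow2_ge_0; pose proof (Bsq_xx_ge1 t); lra).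
  rewrite sqrt_pow2 by (left; apply Rpower_pos').
  rewrite bb_sqrt. unfold phi. pose proof (Rpower_pos' (xx t) (- INR (k + l) / 2)).
  assert (0 < sqrt (Bsq k l (xx t))) by (apply sqrt_lt_R0; pose proof (Bsq_xx_ge1 t); lra).
  field. lra.
Qed.

Lemma BV_rho (lam : nat -> R) :
  asymp_expansion (fun n => f n * Rpower (INR n) (- INR (k + l) / 2)) lam ->
  BV (fun t => f (jj (S t)) / bb (S t)).
Proof.
  intros Has.
  assert (BV (fun t => phi t * / sqrt (chi t))).
  { apply BV_mult.
    - destruct (Has 2%nat) as [C [N HN]].
      apply (BV_from_asym xx xx_ge1 xx_inc phi lam C N).
      intros t Ht. unfold phi. apply (HN (jj (S t))). unfold jj. assert (1 <= k - l)%nat by lia. nia.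
    - apply BV_inv with (c := sqrt Lchi). apply sqrt_lt_R0, Lchi_pos.
      intros t. apply sqrt_le_1_alt. apply chi_lower.
      apply BV_sqrt with (c := Lchi). apply Lchi_pos. apply chi_lower. apply BV_chi. }
  eapply summable_le; [|apply summable_abs; exact H]. intros t; simpl. rewrite !rho_eq. lra.
Qed.

Lemma pow_chord u q : 0 <= u <= 1 -> (1 + u) ^ q <= 1 + u * (2 ^ q - 1).
Proof.
  intros Hu. induction q. simpl. lra.
  simpl. assert (1 <= 2 ^ q) by (apply pow_R1_Rle; lra).
  apply Rle_trans with ((1 + u) * (1 + u * (2 ^ q - 1))).
  apply Rmult_le_compat_l; [lra | exact IHq].
  assert (0 <= u * (1 - u)) by nra.
  assert (0 <= u * (1 - u) * (2 ^ q - 1)) by (apply Rmult_le_pos; lra). nra.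
Qed.

Lemma posdef_ev (lam : nat -> R) (kappa : R) :
  (forall n, 0 <= f n) ->
  asymp_expansion (fun n => f n * Rpower (INR n) (- INR (k + l) / 2)) lam ->
  lam 0%nat = kappa -> kappa < 2 ->
  exists T0 eta, 0 < eta < 1 /\ forall t, (T0 <= t)%nat ->
     f (jj (S (S t))) ^ 2 <= 4 * (1 - eta) ^ 2 * bb (S t) * bb (S (S t)).
Proof.
  intros Hf Has Hk0 Hk2.
  destruct (Has 0%nat) as [C0 [N0 HN0]].
  set (eta := Rmin ((2 - kappa) / 4) (1 / 4)).
  assert (Heta : 0 < eta <= 1/4 /\ eta <= (2 - kappa) / 4).
  { unfold eta. split. split. apply Rmin_glb_lt; lra. apply Rmin_r. apply Rmin_l. }
  set (D := 2 ^ (l + k) - 1).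
  assert (HD : 0 <= D) by (unfold D; assert (1 <= 2 ^ (l + k)) by (apply pow_R1_Rle; lra); lra).
  set (A := INR (k - l) + INR l - 1).
  assert (HA : 0 <= A) by (unfold A; assert (1 <= INR (k - l)) by (apply (le_INR 1); lia); pose proof (pos_INR l); lra).
  destruct (archi (Rmax (INR N0) (Rmax ((C0 / eta) ^ 2) (Rmax A (9 * D * A / (eta ^ 2)))))) as [T HT].
  exists T, eta. split. lra.
  intros t Ht.
  assert (HtT : INR T <= INR t) by (apply le_INR; auto).
  pose proof (Rmax_l (INR N0) (Rmax ((C0 / eta) ^ 2) (Rmax A (9 * D * A / (eta ^ 2))))).
  pose proof (Rmax_r (INR N0) (Rmax ((C0 / eta) ^ 2) (Rmax A (9 * D * A / (eta ^ 2))))).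
  pose proof (Rmax_l ((C0 / eta) ^ 2) (Rmax A (9 * D * A / (eta ^ 2)))).
  pose proof (Rmax_r ((C0 / eta) ^ 2) (Rmax A (9 * D * A / (eta ^ 2)))).
  pose proof (Rmax_l A (9 * D * A / (eta ^ 2))).
  pose proof (Rmax_r A (9 * D * A / (eta ^ 2))).
  set (X := xx (S t)). set (y := xx t - INR l + 1).
  assert (HXy : X = y + A) by (unfold X, y, A; rewrite xx_S; ring).
  assert (Hy : INR t + 2 <= y) by (apply xx_ge_t).
  pose proof (pos_INR t).
  assert (HX : 0 < X) by lra.
  set (Rp := Rpower X (- INR (k + l) / 2)).
  assert (HRp : 0 < Rp) by apply Rpower_pos'.
  set (ph := f (jj (S (S t))) * Rp).
  assert (Hph0 : 0 <= ph) by (unfold ph; apply Rmult_le_pos; [apply Hf| lra]).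
  assert (Hph1 : ph <= kappa + eta).
  { assert (HN : (N0 <= jj (S (S t)))%nat).
    { apply INR_le. fold (xx (S t)). fold X. lra. }
    specialize (HN0 _ HN). cbn [sum_f_R0] in HN0. rewrite Rp_zero in HN0.
    replace (INR (jj (S (S t)))) with X in HN0 by reflexivity.
    replace (0 + 1)%nat with 1%nat in HN0 by reflexivity.
    rewrite Rp_half in HN0 by auto. fold Rp in HN0. fold ph in HN0. rewrite Hk0 in HN0.
    apply Rabs_le_between in HN0 || (apply Rabs_def2b in HN0 || idtac).
    assert (C0 * / sqrt X <= eta).
    { assert (Hs : 0 < sqrt X) by (apply sqrt_lt_R0; lra).
      destruct (Rle_dec C0 0).
      - assert (0 < / sqrt X) by (apply Rinv_0_lt_compat; lra). nra.
      - assert (C0 / eta <= sqrt X).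
        { rewrite <- (sqrt_pow2 (C0 / eta)). apply sqrt_le_1_alt. lra.
          apply Rlt_le, Rdiv_lt_0_compat; lra. }
        apply (Rmult_le_reg_r (sqrt X)). auto. rewrite Rmult_assoc, Rinv_l by lra.
        apply (Rmult_le_reg_r (/ eta)). apply Rinv_0_lt_compat; lra.
        replace (eta * sqrt X * / eta) with (sqrt X) by (field; lra). lra. }
    pose proof (Rle_abs (ph - kappa * 1)). lra. }
  assert (Hu : 0 <= A / y <= 1).
  { split. apply Rdiv_le_0_compat; lra. apply (Rmult_le_reg_r y). lra.
    replace (A / y * y) with A by (field; lra). lra. }
  assert (HDu : D * (A / y) <= eta ^ 2 / 9).
  { apply (Rmult_le_reg_r (9 * y / eta ^ 2)). apply Rdiv_lt_0_compat. lra. apply pow_lt; lra.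
    replace (D * (A / y) * (9 * y / eta ^ 2)) with (9 * D * A / eta ^ 2) by (field; split; lra).
    replace (eta ^ 2 / 9 * (9 * y / eta ^ 2)) with y by (field; lra). lra. }
  assert (HXp : X ^ (l + k) <= y ^ (l + k) * (1 + (A / y) * D)).
  { replace X with (y * (1 + A / y)) by (rewrite HXy; field; lra).
    rewrite Rpow_mult_distr. apply Rmult_le_compat_l. apply pow_le; lra.
    unfold D. apply pow_chord; auto. }
  assert (Hf2 : f (jj (S (S t))) ^ 2 = ph ^ 2 * X ^ (l + k)).
  { unfold ph. rewrite Rpow_mult_distr. unfold Rp. rewrite Rp_sq by auto. rewrite (Nat.add_comm k l).
    field. apply pow_nonzero; lra. }
  assert (Hbb : y ^ (l + k) <= bb (S t) * bb (S (S t))).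
  { pose proof (Bsq_lower k l (xx t) ltac:(pose proof (xx_ge_l t); lra)) as HL. fold y in HL.
    assert (bb (S t) <= bb (S (S t))).
    { rewrite !bb_sqrt. apply sqrt_le_1_alt. rewrite xx_S. apply Bsq_mono. pose proof (xx_ge_l t); lra. apply pos_INR. }
    pose proof (bbS_ge1 t).
    assert (bb (S t) * bb (S t) <= bb (S t) * bb (S (S t))) by (apply Rmult_le_compat_l; lra).
    assert (bb (S t) * bb (S t) = Bsq k l (xx t)) by (rewrite bb_sqrt; apply sqrt_sqrt; pose proof (Bsq_xx_ge1 t); lra).
    lra. }
  rewrite Hf2.
  assert (Hyp : 0 <= y ^ (l + k)) by (apply pow_le; lra).
  assert (Hfin : ph ^ 2 * (1 + A / y * D) <= 4 * (1 - eta) ^ 2).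
  { assert (ph ^ 2 <= (2 - 3 * eta) ^ 2) by (apply pow_incr; lra).
    assert (ph ^ 2 <= 4) by nra.
    assert (ph ^ 2 * (A / y * D) <= 4 * (eta ^ 2 / 9)).
    { apply Rmult_le_compat. apply pow2_ge_0. apply Rmult_le_pos; lra. auto. lra. }
    nra. }
  apply Rle_trans with (ph ^ 2 * (y ^ (l + k) * (1 + A / y * D))).
  apply Rmult_le_compat_l. apply pow2_ge_0. auto.
  apply Rle_trans with (4 * (1 - eta) ^ 2 * y ^ (l + k)).
  replace (ph ^ 2 * (y ^ (l + k) * (1 + A / y * D))) with ((ph ^ 2 * (1 + A / y * D)) * y ^ (l + k)) by ring.
  apply Rmult_le_compat_r; auto.
  replace (4 * (1 - eta) ^ 2 * bb (S t) * bb (S (S t))) with (4 * (1 - eta) ^ 2 * (bb (S t) * bb (S (S t)))) by ring.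
  apply Rmult_le_compat_l. apply Rmult_le_pos; [lra| apply pow2_ge_0]. auto.
Qed.

Lemma Y_bound (lam : nat -> R) (kappa : R) :
  (forall n, 0 <= f n) ->
  asymp_expansion (fun n => f n * Rpower (INR n) (- INR (k + l) / 2)) lam ->
  lam 0%nat = kappa -> kappa < 2 ->
  exists K T, forall t, (T <= t)%nat ->
    fst (Y (S (S t))) ^ 2 + snd (Y (S (S t))) ^ 2 <= K / bb (S t).
Proof.
  intros Hf Has Hk0 Hk2.
  destruct (posdef_ev lam kappa Hf Has Hk0 Hk2) as [T0 [eta [Heta HT0]]].
  destruct (energy (fun t => bb (S t)) (fun t => f (jj (S t))) sg Cb eta
              (fun t => fst (Y (S t))) (fun t => snd (Y (S t))) T0) as [K HK].
  - intros t. pose proof (Y_rec (S t)) as E. apply (f_equal fst) in E.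
    unfold hh, Cmult, Cplus, RtoC in E. simpl in E. lra.
  - intros t. pose proof (Y_rec (S t)) as E. apply (f_equal snd) in E.
    unfold hh, Cmult, Cplus, RtoC in E. simpl in E. lra.
  - intros t. apply bbS_ge1.
  - apply Cb_ge1.
  - intros t. apply bb_step.
  - apply summable_ratio.
  - apply summable_inv_bb.
  - apply (BV_rho lam Has).
  - auto.
  - auto.
  - exists K, T0. intros t Ht. apply (HK t Ht).
Qed.
End Class.


Fixpoint csumN (a : nat -> C) (N : nat) : C :=
  match N with O => RtoC 0 | S N => Cplus (csumN a N) (a N) end.

Lemma csumN_ext a b N : (forall n, a n = b n) -> csumN a N = csumN b N.
Proof. intros H; induction N; simpl; auto. rewrite IHN, H; auto. Qed.

Lemma csumN_plus a b N : csumN (fun n => Cplus (a n) (b n)) N = Cplus (csumN a N) (csumN b N).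
Proof. induction N; simpl. ceq. rewrite IHN. destruct (csumN a N), (csumN b N), (a N), (b N). ceq. Qed.

Lemma csumN_scal c a N : csumN (fun n => Cmult c (a n)) N = Cmult c (csumN a N).
Proof. induction N; simpl. destruct c; ceq. rewrite IHN. destruct c, (csumN a N), (a N). ceq. Qed.

Lemma csumN_zero a N : (forall n, (n < N)%nat -> a n = RtoC 0) -> csumN a N = RtoC 0.
Proof. intros H; induction N; simpl; auto. rewrite IHN. rewrite H by lia. ceq. intros; apply H; lia. Qed.

Lemma csumN_delta j c N : (j < N)%nat -> csumN (fun n => if (n =? j)%nat then c else RtoC 0) N = c.
Proof.
  intros H. induction N. lia.
  simpl. destruct (Nat.eq_dec j N).
  - subst. rewrite Nat.eqb_refl. rewrite csumN_zero. destruct c; ceq.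
    intros n Hn. destruct (Nat.eqb_spec n N); auto. lia.
  - rewrite IHN by lia. destruct (Nat.eqb_spec N j). lia. destruct c; ceq.
Qed.

Lemma sum_n_csumN (a : nat -> C) n : sum_n a n = csumN a (S n).
Proof.
  induction n. rewrite sum_O. simpl. destruct (a 0%nat); ceq.
  rewrite sum_Sn, IHn. reflexivity.
Qed.

Lemma csumN_stable a N n : (forall n, (N <= n)%nat -> a n = RtoC 0) -> (N <= n)%nat -> csumN a n = csumN a N.
Proof.
  intros H Hn. induction Hn; auto. simpl. rewrite IHHn, H by lia. destruct (csumN a N); ceq.
Qed.

Lemma is_series_finite (a : nat -> C) N :
  (forall n, (N <= n)%nat -> a n = RtoC 0) -> is_series a (csumN a N).
Proof.
  intros H. unfold is_series.
  apply filterlim_ext_loc with (f := fun _ => csumN a N).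
  - exists N. intros n Hn. rewrite sum_n_csumN. symmetry. apply csumN_stable; auto.
  - apply filterlim_const.
Qed.

Lemma is_series_uniq (a : nat -> C) L1 L2 : is_series a L1 -> is_series a L2 -> L1 = L2.
Proof. intros H1 H2. exact (filterlim_locally_unique _ _ _ H1 H2). Qed.

Section Op.
Variables (k l : nat) (theta : R) (f : nat -> R) (s : R).
Hypothesis Hlk : (l < k)%nat.

Definition hC n : C := (f n, s).
Definition alpha n : C := Cmult (xi theta) (RtoC (if (k - l <=? n)%nat then bc k l (n - (k - l)) else 0)).
Definition beta n : C := Cmult (Cconj (xi theta)) (RtoC (bc k l n)).

Definition Bop (phi : vec) : vec := vadd (opA k l theta f phi) (vscal (RtoC s * Ci)%C phi).

Lemma Bop_eq phi n : Bop phi n =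
  Cplus (Cplus (Cmult (alpha n) (phi (n - (k - l))%nat)) (Cmult (beta n) (phi (n + (k - l))%nat)))
        (Cmult (hC n) (phi n)).
Proof.
  unfold Bop, opA, vadd, vscal, op_fN. rewrite mono_kl, mono_lk by lia.
  unfold alpha, beta, hC.
  destruct (xi theta) as [x1 x2]. destruct (phi (n - (k - l))%nat) as [p1 p2].
  destruct (phi (n + (k - l))%nat) as [q1 q2]. destruct (phi n) as [r1 r2].
  unfold Cconj, Cmult, Cplus, RtoC, Ci. ceq.
Qed.

Definition Row (w : nat -> C) (j : nat) : C :=
  Cplus (Cplus (Cmult (Cmult (xi theta) (RtoC (bc k l j))) (w (j + (k - l))%nat))
               (if (k - l <=? j)%nat then Cmult (Cmult (Cconj (xi theta)) (RtoC (bc k l (j - (k - l))))) (w (j - (k - l))%nat) else RtoC 0))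
        (Cmult (hC j) (w j)).

Definition summand (w : nat -> C) (phi : vec) (n : nat) : C :=
  Cmult (w n) (Cplus (Cplus (Cmult (alpha n) (phi (n - (k - l))%nat)) (Cmult (beta n) (phi (n + (k - l))%nat)))
        (Cmult (hC n) (phi n))).

Definition ej (j : nat) : vec := fun n => if (n =? j)%nat then RtoC 1 else RtoC 0.

Lemma L_unit w j M : (j + (k - l) < M)%nat -> csumN (summand w (ej j)) M = Row w j.
Proof.
  intros HM. set (m := (k - l)%nat). assert (Hm : (1 <= m)%nat) by (unfold m; lia).
  set (T1 := fun n => if (n =? j + m)%nat then Cmult (w (j + m)%nat) (Cmult (xi theta) (RtoC (bc k l j))) else RtoC 0).
  set (T2 := fun n => Cmult (if (m <=? j)%nat then RtoC 1 else RtoC 0)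
       (if (n =? j - m)%nat then Cmult (w (j - m)%nat) (Cmult (Cconj (xi theta)) (RtoC (bc k l (j - m)))) else RtoC 0)).
  set (T3 := fun n => if (n =? j)%nat then Cmult (w j) (hC j) else RtoC 0).
  rewrite (csumN_ext _ (fun n => Cplus (Cplus (T1 n) (T2 n)) (T3 n))).
  - rewrite !csumN_plus. unfold T2. rewrite csumN_scal.
    unfold T1, T3. rewrite !csumN_delta by lia.
    unfold Row. fold m. destruct (m <=? j)%nat eqn:E.
    + destruct (w (j + m)%nat), (w (j - m)%nat), (w j), (xi theta), (hC j). unfold Cconj. ceq.
    + destruct (w (j + m)%nat), (w (j - m)%nat), (w j), (xi theta), (hC j). unfold Cconj. ceq.
  - intros n. unfold summand, T1, T2, T3, ej, alpha, beta. fold m.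
    destruct (Nat.eqb_spec n (j + m)); destruct (Nat.leb_spec m n); destruct (Nat.eqb_spec (n - m) j);
    destruct (Nat.leb_spec m j); destruct (Nat.eqb_spec n (j - m)); destruct (Nat.eqb_spec (n + m) j);
    destruct (Nat.eqb_spec n j); try (exfalso; lia);
    repeat match goal with |- context [w ?a] => tryif (constr_eq a n) then fail else (replace a with n by lia) end;
    repeat match goal with |- context [hC ?a] => tryif (constr_eq a n) then fail else (replace a with n by lia) end;
    repeat match goal with |- context [bc k l ?a] => tryif (constr_eq a n) then fail else (replace a with n by lia) end;
    repeat match goal with |- context [bc k l ?a] => tryif (constr_eq a j) then fail else (replace a with j by lia) end;
    destruct (w n), (hC n), (xi theta); unfold Cconj; ceq.
Qed.

Lemma L_gen w : (forall j, Row w j = RtoC 0) -> forall N phi, (forall n, (N <= n)%nat -> phi n = RtoC 0) ->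
  forall M, (N + (k - l) <= M)%nat -> csumN (summand w phi) M = RtoC 0.
Proof.
  intros Hrow N. induction N; intros phi Hphi M HM.
  - apply csumN_zero. intros n _. unfold summand. rewrite !Hphi by lia.
    destruct (w n), (alpha n), (beta n), (hC n). ceq.
  - set (phi' := fun n => if (n =? N)%nat then RtoC 0 else phi n).
    assert (Hd : forall x, phi x = Cplus (phi' x) (Cmult (phi N) (ej N x))).
    { intros x. unfold phi', ej. destruct (Nat.eqb_spec x N). subst. destruct (phi N); ceq. destruct (phi x); ceq. }
    rewrite (csumN_ext _ (fun n => Cplus (summand w phi' n) (Cmult (phi N) (summand w (ej N) n)))).
    + rewrite csumN_plus, csumN_scal. rewrite IHN.
      rewrite L_unit by lia. rewrite Hrow. ceq.
      intros n Hn. unfold phi'. destruct (Nat.eqb_spec n N). auto. apply Hphi. lia. lia.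
    + intros n. unfold summand. rewrite (Hd (n - (k - l))%nat), (Hd (n + (k - l))%nat), (Hd n).
      generalize (w n) (alpha n) (beta n) (hC n) (phi' (n - (k - l))%nat) (phi' (n + (k - l))%nat) (phi' n)
        (ej N (n - (k - l))%nat) (ej N (n + (k - l))%nat) (ej N n) (phi N).
      intros [] [] [] [] [] [] [] [] [] [] []. ceq.
Qed.

Lemma rows_to_orth psi : (forall j, Row (fun n => Cconj (psi n)) j = RtoC 0) ->
  forall phi, in_D0 phi -> orth psi (Bop phi).
Proof.
  intros Hrow phi [N HN]. unfold orth.
  set (a := fun n => Cmult (Cconj (psi n)) (Bop phi n)).
  assert (Ha : forall n, (N + (k - l) <= n)%nat -> a n = RtoC 0).
  { intros n Hn. unfold a. rewrite Bop_eq. rewrite !HN by lia.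
    destruct (Cconj (psi n)), (alpha n), (beta n), (hC n). ceq. }
  pose proof (is_series_finite a _ Ha).
  assert (csumN a (N + (k - l)) = RtoC 0).
  { rewrite (csumN_ext _ (summand (fun n => Cconj (psi n)) phi)).
    apply (L_gen _ Hrow N phi HN). lia.
    intros n. unfold a, summand. rewrite Bop_eq. reflexivity. }
  rewrite H0 in H. exact H.
Qed.

Lemma orth_to_rows psi : (forall phi, in_D0 phi -> orth psi (Bop phi)) ->
  forall j, Row (fun n => Cconj (psi n)) j = RtoC 0.
Proof.
  intros H j.
  assert (HD : in_D0 (ej j)).
  { exists (S j). intros n Hn. unfold ej. destruct (Nat.eqb_spec n j). lia. auto. }
  specialize (H _ HD). unfold orth in H.
  set (a := fun n => Cmult (Cconj (psi n)) (Bop (ej j) n)) in H.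
  assert (Ha : forall n, (S (j + (k - l)) <= n)%nat -> a n = RtoC 0).
  { intros n Hn. unfold a. rewrite Bop_eq. unfold ej.
    destruct (Nat.eqb_spec (n - (k - l)) j). lia. destruct (Nat.eqb_spec (n + (k - l)) j). lia.
    destruct (Nat.eqb_spec n j). lia.
    destruct (Cconj (psi n)), (alpha n), (beta n), (hC n). ceq. }
  pose proof (is_series_finite a _ Ha).
  pose proof (is_series_uniq _ _ _ H H0).
  rewrite <- (L_unit _ j (S (j + (k - l)))) by lia.
  rewrite H1. apply csumN_ext. intros n. unfold a, summand. rewrite Bop_eq. reflexivity.
Qed.
End Op.


Fixpoint cpow (z : C) (n : nat) : C := match n with O => RtoC 1 | S n => Cmult z (cpow z n) end.

Lemma xi_unit theta : Cmult (xi theta) (Cconj (xi theta)) = RtoC 1.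
Proof. unfold xi, Cconj, Cmult, RtoC. simpl. pose proof (sin2_cos2 theta). unfold Rsqr in H.
  apply injective_projections; simpl; lra. Qed.

Lemma cpow_unit theta t : Cmult (cpow (xi theta) t) (cpow (Cconj (xi theta)) t) = RtoC 1.
Proof.
  induction t. simpl. ceq. simpl.
  pose proof (xi_unit theta). revert H IHt.
  generalize (xi theta) (Cconj (xi theta)) (cpow (xi theta) t) (cpow (Cconj (xi theta)) t).
  intros [a1 a2] [b1 b2] [c1 c2] [d1 d2] H1 H2.
  unfold Cmult, RtoC in *; simpl in *. injection H1; injection H2; intros. apply injective_projections; simpl; nra.
Qed.

Lemma Cmod_xi theta : Cmod (xi theta) = 1.
Proof. unfold Cmod, xi. simpl. rewrite Rmult_1_r, Rmult_1_r. pose proof (sin2_cos2 theta). unfold Rsqr in H.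
  rewrite Rplus_comm, H. apply sqrt_1. Qed.

Lemma Cmod_cpow_conj theta t : Cmod (cpow (Cconj (xi theta)) t) = 1.
Proof. induction t; simpl. apply Cmod_1. rewrite Cmod_mult, IHt, Cmod_conj, Cmod_xi. ring. Qed.

Lemma csum_S d g : csum (S d) g = Cplus (csum d g) (g d).
Proof.
  unfold csum. rewrite seq_S, map_app, fold_right_app. simpl.
  generalize (g d). intros c. induction (map g (seq 0 d)); simpl. destruct c; ceq.
  rewrite IHl. destruct a, c, (fold_right Cplus 0%C l). ceq.
Qed.

Lemma csum_zero d g : (forall j, (j < d)%nat -> g j = RtoC 0) -> csum d g = RtoC 0.
Proof. induction d; intros H. reflexivity. rewrite csum_S, IHd. rewrite H by lia. ceq. intros; apply H; lia. Qed.

Lemma csum_single d g j0 : (j0 < d)%nat -> (forall j, (j < d)%nat -> j <> j0 -> g j = RtoC 0) -> csum d g = g j0.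
Proof.
  induction d; intros Hj H. lia. rewrite csum_S. destruct (Nat.eq_dec j0 d).
  - subst. rewrite csum_zero. destruct (g d); ceq. intros; apply H; lia.
  - rewrite IHd. rewrite (H d) by lia. destruct (g j0); ceq. lia. intros; apply H; lia.
Qed.

Section Fin.
Variables (k l : nat) (theta : R) (f : nat -> R) (s : R).
Hypothesis Hlk : (l < k)%nat.
Hypothesis H3 : (3 <= k + l)%nat.
Hypothesis Hs : s <> 0.

Let m := (k - l)%nat.
Lemma m_pos : (1 <= m)%nat. Proof. unfold m; lia. Qed.

Definition W (r n : nat) : C :=
  if (andb (l <=? n)%nat ((n - l) mod (k - l) =? r)%nat)
  then Cmult (cpow (Cconj (xi theta)) ((n - l) / (k - l))) (Y k l f s r ((n - l) / (k - l)))
  else RtoC 0.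

Lemma jjS' r t : jj k l r (S t) = (jj k l r t + (k - l))%nat.
Proof. unfold jj. simpl. lia. Qed.

Lemma jj_mod r t : (r < k - l)%nat -> ((jj k l r t - l) mod (k - l) = r /\ (jj k l r t - l) / (k - l) = t)%nat.
Proof.
  intros Hr. unfold jj. replace (l + r + t * (k - l) - l)%nat with (r + t * (k - l))%nat by nia.
  split. rewrite Nat.Div0.mod_add. apply Nat.mod_small; auto.
  rewrite Nat.div_add by lia. rewrite Nat.div_small by auto. lia.
Qed.

Lemma W_in r t : (r < k - l)%nat -> W r (jj k l r t) = Cmult (cpow (Cconj (xi theta)) t) (Y k l f s r t).
Proof.
  intros Hr. unfold W. destruct (jj_mod r t Hr) as [E1 E2]. rewrite E1, E2.
  rewrite Nat.eqb_refl. replace (l <=? jj k l r t)%nat with true. reflexivity.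
  symmetry; apply Nat.leb_le. unfold jj; lia.
Qed.

Lemma W_out r n : (n < l)%nat -> W r n = RtoC 0.
Proof. intros H. unfold W. replace (l <=? n)%nat with false. reflexivity. symmetry; apply Nat.leb_gt; auto. Qed.

Lemma W_other r n : ((n - l) mod (k - l) <> r)%nat -> W r n = RtoC 0.
Proof. intros H. unfold W. destruct (l <=? n)%nat; simpl; auto. apply Nat.eqb_neq in H. rewrite H. auto. Qed.

Lemma decomp n : (l <= n)%nat -> n = jj k l ((n - l) mod (k - l)) ((n - l) / (k - l)).
Proof. intros H. unfold jj. pose proof (Nat.div_mod_eq (n - l) (k - l)). nia. Qed.

Lemma mod_shift n : (l <= n)%nat -> ((n + (k - l) - l) mod (k - l) = (n - l) mod (k - l))%nat.
Proof. intros H. replace (n + (k - l) - l)%nat with (n - l + 1 * (k - l))%nat by lia. apply Nat.Div0.mod_add. Qed.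


Lemma alg1 (x z P Y2 Y0 Y1 h : C) (b b' : R) :
  Cplus (Cplus (Cmult (Cmult x (RtoC b)) (Cmult (Cmult z (Cmult z P)) Y2)) (Cmult (Cmult z (RtoC b')) (Cmult P Y0)))
        (Cmult h (Cmult (Cmult z P) Y1)) =
  Cmult (Cmult z P) (Cplus (Cmult (Cmult x z) (Cmult (RtoC b) Y2)) (Cplus (Cmult (RtoC b') Y0) (Cmult h Y1))).
Proof. destruct x, z, P, Y2, Y0, Y1, h. unfold RtoC. ceq. Qed.

Lemma alg0 (x z Y1 Y0 h E : C) (b : R) :
  Cplus (Cplus (Cmult (Cmult x (RtoC b)) (Cmult (Cmult z (RtoC 1)) Y1)) E) (Cmult h (Cmult (RtoC 1) Y0)) =
  Cplus (Cmult (Cmult x z) (Cmult (RtoC b) Y1)) (Cplus E (Cmult h Y0)).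
Proof. destruct x, z, Y1, Y0, h, E. unfold RtoC. ceq. Qed.

Lemma one_mult (X : C) : Cmult (RtoC 1) X = X.
Proof. destruct X; unfold RtoC; ceq. Qed.

Lemma Row_ext w1 w2 j : (forall n, w1 n = w2 n) -> Row k l theta f s w1 j = Row k l theta f s w2 j.
Proof. intros H. unfold Row. rewrite !H. reflexivity. Qed.

Lemma Row_W r j : (r < k - l)%nat -> Row k l theta f s (W r) j = RtoC 0.
Proof.
  intros Hr. pose proof m_pos as Hm. unfold m in Hm.
  unfold Row.
  destruct (le_lt_dec l j) as [Hlj | Hlj].
  2:{ rewrite (bc_zero k l j Hlj). rewrite (W_out r j Hlj).
      destruct (k - l <=? j)%nat eqn:E.
      - apply Nat.leb_le in E. rewrite (bc_zero k l (j - (k - l))) by lia.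
        destruct (xi theta), (Cconj (xi theta)), (W r (j + (k - l))%nat), (W r (j - (k - l))%nat), (hC f s j). unfold RtoC; ceq.
      - destruct (xi theta), (W r (j + (k - l))%nat), (hC f s j). unfold RtoC; ceq. }
  destruct (Nat.eq_dec ((j - l) mod (k - l)) r) as [Hres | Hres].
  2:{ rewrite (W_other r j) by auto. rewrite (W_other r (j + (k - l))) by (rewrite mod_shift; auto).
      destruct (k - l <=? j)%nat eqn:E.
      - apply Nat.leb_le in E.
        assert (HW : W r (j - (k - l)) = RtoC 0).
        { destruct (le_lt_dec l (j - (k - l))). apply W_other.
          pose proof (mod_shift (j - (k - l)) l0). replace (j - (k - l) + (k - l))%nat with j in H by lia. congruence.
          apply W_out; auto. }
        rewrite HW. destruct (xi theta), (Cconj (xi theta)), (hC f s j). unfold RtoC; ceq.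
      - destruct (xi theta), (hC f s j). unfold RtoC; ceq. }
  pose proof (decomp j Hlj) as Hj. rewrite Hres in Hj.
  set (t := ((j - l) / (k - l))%nat) in Hj. clearbody t. subst j.
  destruct t as [|t'].
  - rewrite W_in by auto. rewrite <- jjS', W_in by auto.
    assert (HE : (if (k - l <=? jj k l r 0)%nat then Cmult (Cmult (Cconj (xi theta)) (RtoC (bc k l (jj k l r 0 - (k - l))))) (W r (jj k l r 0 - (k - l))) else RtoC 0) = RtoC 0).
    { destruct (k - l <=? jj k l r 0)%nat eqn:E. apply Nat.leb_le in E.
      rewrite (bc_zero k l (jj k l r 0 - (k - l))) by (unfold jj in *; lia).
      destruct (Cconj (xi theta)), (W r (jj k l r 0 - (k - l))%nat). unfold RtoC; ceq. reflexivity. }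
    rewrite HE. simpl cpow. rewrite alg0. rewrite xi_unit, one_mult.
    pose proof (Y_rec0 k l f s r Hlk H3). unfold bb, hh in H. unfold hC. apply eq_trans with (2 := H).
    destruct (Y k l f s r 1), (Y k l f s r 0). unfold RtoC; ceq.
  - rewrite W_in by auto. rewrite <- jjS', W_in by auto.
    assert (E : (k - l <=? jj k l r (S t'))%nat = true) by (apply Nat.leb_le; rewrite jjS'; lia).
    rewrite E. replace (jj k l r (S t') - (k - l))%nat with (jj k l r t') by (rewrite jjS'; lia).
    rewrite W_in by auto. simpl cpow.
    rewrite alg1. rewrite xi_unit, one_mult.
    pose proof (Y_rec k l f s r Hlk H3 t'). unfold bb, hh in H. unfold hC. rewrite H.
    destruct (cpow (Cconj (xi theta)) t'), (Cconj (xi theta)). unfold RtoC; ceq.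
Qed.

Lemma Ccancel (b : R) (X Y : C) : b <> 0 -> Cmult (RtoC b) X = Cmult (RtoC b) Y -> X = Y.
Proof.
  intros Hb H. destruct X as [x1 x2], Y as [y1 y2]. unfold Cmult, RtoC in H; simpl in H.
  injection H; intros H2 H1. apply injective_projections; simpl.
  apply (Rmult_eq_reg_l b); auto. lra. apply (Rmult_eq_reg_l b); auto. lra.
Qed.

Lemma class_unique (psi : vec) :
  (forall j, Row k l theta f s (fun n => Cconj (psi n)) j = RtoC 0) ->
  forall r, (r < k - l)%nat -> forall t,
    Cmult (cpow (xi theta) t) (Cconj (psi (jj k l r t))) = Cmult (Cconj (psi (jj k l r 0))) (Y k l f s r t).
Proof.
  intros Hrow r Hr.
  set (w := fun n => Cconj (psi n)).
  assert (Hm : (1 <= k - l)%nat) by lia.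
  assert (HP : forall t, Cmult (cpow (xi theta) t) (w (jj k l r t)) = Cmult (w (jj k l r 0)) (Y k l f s r t)
                  /\ Cmult (cpow (xi theta) (S t)) (w (jj k l r (S t))) = Cmult (w (jj k l r 0)) (Y k l f s r (S t))).
  { intros t. induction t as [|t IHt].
    - split.
      + simpl cpow. change (Y k l f s r 0) with (RtoC 1). ring.
      + pose proof (Hrow (jj k l r 0)) as HR. fold w in HR. unfold Row in HR.
        assert (HE : (if (k - l <=? jj k l r 0)%nat then Cmult (Cmult (Cconj (xi theta)) (RtoC (bc k l (jj k l r 0 - (k - l))))) (w (jj k l r 0 - (k - l))%nat) else RtoC 0) = RtoC 0).
        { destruct (k - l <=? jj k l r 0)%nat eqn:E. apply Nat.leb_le in E.
          rewrite (bc_zero k l (jj k l r 0 - (k - l))) by (unfold jj in *; lia). ring. reflexivity. }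
        rewrite HE in HR. rewrite <- jjS' in HR.
        pose proof (Y_rec0 k l f s r Hlk H3) as HY. unfold bb, hh in HY. unfold hC in HR.
        change (Y k l f s r 0) with (RtoC 1) in HY.
        pose proof (bb_pos k l r Hlk H3 0) as Hb. unfold bb in Hb.
        apply (Ccancel (bc k l (jj k l r 0))). lra.
        simpl cpow.
        transitivity (Copp (Cmult (f (jj k l r 0), s) (w (jj k l r 0)))).
        * apply eq_trans with (Cplus (Cplus (Cmult (Cmult (xi theta) (RtoC (bc k l (jj k l r 0)))) (w (jj k l r 1))) (RtoC 0)) (Cmult (f (jj k l r 0), s) (w (jj k l r 0))) - Cmult (f (jj k l r 0), s) (w (jj k l r 0)))%C.
          ring. rewrite HR. ring.
        * apply eq_trans with (Cmult (w (jj k l r 0)) (Cplus (Cmult (RtoC (bc k l (jj k l r 0))) (Y k l f s r 1)) (Cmult (f (jj k l r 0), s) (RtoC 1))) - Cmult (f (jj k l r 0), s) (w (jj k l r 0)))%C.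
          rewrite HY. ring. ring.
    - destruct IHt as [IH1 IH2]. split; auto.
      pose proof (Hrow (jj k l r (S t))) as HR. fold w in HR. unfold Row in HR.
      assert (E : (k - l <=? jj k l r (S t))%nat = true) by (apply Nat.leb_le; rewrite jjS'; lia).
      rewrite E in HR. replace (jj k l r (S t) - (k - l))%nat with (jj k l r t) in HR by (rewrite jjS'; lia).
      rewrite <- jjS' in HR.
      pose proof (Y_rec k l f s r Hlk H3 t) as HY. unfold bb, hh in HY. unfold hC in HR.
      pose proof (bb_pos k l r Hlk H3 (S t)) as Hb. unfold bb in Hb.
      pose proof (xi_unit theta) as Hu.
      apply (Ccancel (bc k l (jj k l r (S t)))). lra.
      simpl cpow. simpl cpow in IH2.
      set (P := cpow (xi theta) t) in *. set (Z := Cconj (xi theta)) in *. set (X := xi theta) in *.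
      set (b1 := bc k l (jj k l r (S t))) in *. set (b0 := bc k l (jj k l r t)) in *.
      set (h1 := (f (jj k l r (S t)), s)) in *.
      (* multiply the row by X^(S t) = X * P *)
      transitivity (Cmult (Cmult X P) (Cplus (Cplus (Cmult (Cmult X (RtoC b1)) (w (jj k l r (S (S t))))) (Cmult (Cmult Z (RtoC b0)) (w (jj k l r t)))) (Cmult h1 (w (jj k l r (S t)))))
                    - Cmult (RtoC b0) (Cmult (Cmult X Z) (Cmult P (w (jj k l r t)))) - Cmult h1 (Cmult (Cmult X P) (w (jj k l r (S t)))))%C.
      ring.
      rewrite HR, Hu.
      rewrite IH2. rewrite IH1.
      transitivity (Cmult (w (jj k l r 0)) (Cplus (Cmult (RtoC b1) (Y k l f s r (S (S t)))) (Cplus (Cmult (RtoC b0) (Y k l f s r t)) (Cmult h1 (Y k l f s r (S t)))))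
                    - Cmult (RtoC b0) (Cmult (w (jj k l r 0)) (Y k l f s r t)) - Cmult h1 (Cmult (w (jj k l r 0)) (Y k l f s r (S t))))%C.
      2: ring.
      rewrite HY. ring. }
  intros t. apply HP.
Qed.

Lemma bc_inv_bound u : / bc k l (u + l) <= / ((INR u + 1) * sqrt (INR u + 1)).
Proof.
  pose proof (pos_INR u).
  assert (Hp : 0 < (INR u + 1) * sqrt (INR u + 1)) by (apply Rmult_lt_0_compat; [lra|apply sqrt_lt_R0; lra]).
  apply Rinv_le_contravar; auto.
  pose proof (bc_pos k l (u + l) ltac:(lia)) as Hb.
  pose proof (bc_sq k l (u + l) ltac:(lia)) as Hsq.
  pose proof (Bsq_lower k l (INR (u + l)) ltac:(apply le_INR; lia)) as HL.
  replace (INR (u + l) - INR l + 1) with (INR u + 1) in HL by (rewrite plus_INR; ring).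
  assert (((INR u + 1) * sqrt (INR u + 1)) ^ 2 <= bc k l (u + l) ^ 2).
  { rewrite Hsq. rewrite Rpow_mult_distr, pow2_sqrt by lra.
    apply Rle_trans with ((INR u + 1) ^ (l + k)); auto.
    replace ((INR u + 1) ^ 2 * (INR u + 1)) with ((INR u + 1) ^ 3) by ring.
    replace (l + k)%nat with (3 + (l + k - 3))%nat by lia. rewrite pow_add.
    assert (1 <= (INR u + 1) ^ (l + k - 3)) by (apply pow_R1_Rle; lra).
    assert (0 <= (INR u + 1) ^ 3) by (apply pow_le; lra). nra. }
  destruct (Rle_dec ((INR u + 1) * sqrt (INR u + 1)) (bc k l (u + l))) as [Hle|Hlt]; auto.
  exfalso. apply Rnot_le_lt in Hlt. simpl in H0. nra.
Qed.

Lemma Cmod_sq (z : C) : Cmod z ^ 2 = fst z ^ 2 + snd z ^ 2.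
Proof. unfold Cmod. rewrite pow2_sqrt. auto. pose proof (pow2_ge_0 (fst z)); pose proof (pow2_ge_0 (snd z)); lra. Qed.

Lemma v_l2 (lam : nat -> R) (kappa : R) r :
  (forall n, 0 <= f n) ->
  asymp_expansion (fun n => f n * Rpower (INR n) (- INR (k + l) / 2)) lam ->
  lam 0%nat = kappa -> kappa < 2 -> (r < k - l)%nat ->
  in_l2 (fun n => Cconj (W r n)).
Proof.
  intros Hf Has Hk0 Hk2 Hr.
  destruct (Y_bound k l f s r Hlk H3 lam kappa Hf Has Hk0 Hk2) as [K [T HKT]].
  unfold in_l2. apply summable_ex_series. intros n; apply pow2_ge_0.
  set (c := fun n => Rabs K * / bc k l (n - (k - l))).
  apply summable_le_ev with (T0 := jj k l r (T + 2)) (c := c).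
  - intros n Hn.
    assert (Hn1 : (l + (k - l) <= n)%nat) by (unfold jj in Hn; nia).
    pose proof (bc_pos k l (n - (k - l)) ltac:(lia)) as Hb.
    assert (Hc0 : 0 <= c n) by (unfold c; apply Rmult_le_pos; [apply Rabs_pos| left; apply Rinv_0_lt_compat; auto]).
    rewrite Rabs_right by (apply Rle_ge, pow2_ge_0). rewrite Cmod_conj.
    destruct (Nat.eq_dec ((n - l) mod (k - l)) r) as [Hres|Hres].
    + pose proof (decomp n ltac:(lia)) as Hd. rewrite Hres in Hd.
      set (t := ((n - l) / (k - l))%nat) in Hd. clearbody t.
      assert (Ht : (T + 2 <= t)%nat).
      { subst n. unfold jj in Hn. nia. }
      destruct t as [|[|t'']]; try lia.
      subst n. rewrite W_in by auto. rewrite Cmod_mult, Cmod_cpow_conj, Rmult_1_l.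
      rewrite Cmod_sq. eapply Rle_trans. apply HKT. lia.
      unfold c, bb. replace (jj k l r (S (S t'')) - (k - l))%nat with (jj k l r (S t'')) by (rewrite !jjS'; lia).
      unfold Rdiv. apply Rmult_le_compat_r. left; apply Rinv_0_lt_compat. apply bc_pos; unfold jj; lia.
      apply Rle_abs.
    + rewrite W_other by auto. rewrite Cmod_0. simpl. rewrite Rmult_0_l. auto.
  - apply summable_shiftn with (c := (k - l + l)%nat).
    eapply summable_le; [|exact (summable_scal (Rabs K) _ (summable_abs _ Z32))].
    intros u. unfold c. replace (u + (k - l + l) - (k - l))%nat with (u + l)%nat by lia.
    pose proof (bc_pos k l (u + l) ltac:(lia)).
    rewrite Rabs_right. 2:{ apply Rle_ge, Rmult_le_pos. apply Rabs_pos. left; apply Rinv_0_lt_compat; auto. }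
    apply Rmult_le_compat_l. apply Rabs_pos.
    eapply Rle_trans. apply bc_inv_bound. apply Rle_abs.
Qed.

Lemma hC_nonzero (a b : R) (z : C) : b <> 0 -> Cmult (a, b) z = RtoC 0 -> z = RtoC 0.
Proof.
  intros Hb H. destruct z as [z1 z2]. unfold Cmult, RtoC in H; simpl in H. injection H; intros H2 H1.
  assert (z1 = 0 /\ z2 = 0).
  { assert ((a * a + b * b) * z1 = 0).
    { replace ((a * a + b * b) * z1) with (a * (a * z1 - b * z2) + b * (a * z2 + b * z1)) by ring. rewrite H1, H2. ring. }
    assert ((a * a + b * b) * z2 = 0).
    { replace ((a * a + b * b) * z2) with (a * (a * z2 + b * z1) - b * (a * z1 - b * z2)) by ring. rewrite H1, H2. ring. }
    assert (0 < a * a + b * b) by (assert (0 < b * b) by (apply Rsqr_pos_lt; auto); nra).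
    split; apply (Rmult_eq_reg_l (a * a + b * b)); lra. }
  destruct H0; subst; reflexivity.
Qed.

Lemma main_dim (lam : nat -> R) (kappa : R) :
  (forall n, 0 <= f n) ->
  asymp_expansion (fun n => f n * Rpower (INR n) (- INR (k + l) / 2)) lam ->
  lam 0%nat = kappa -> kappa < 2 ->
  has_dim (defect_space (opA k l theta f) s) (k - l).
Proof.
  intros Hf Has Hk0 Hk2.
  exists (fun r n => Cconj (W r n)). split; [|split].
  - intros r Hr. split.
    + apply (v_l2 lam kappa r Hf Has Hk0 Hk2 Hr).
    + intros phi HD. change (orth (fun n => Cconj (W r n)) (Bop k l theta f s phi)).
      apply rows_to_orth; auto. intros j. rewrite (Row_ext _ (W r)). apply Row_W; auto.
      intros n; apply Cconj_conj.
  - intros c Hc j Hj. specialize (Hc (l + j)%nat).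
    rewrite (csum_single _ _ j) in Hc; auto.
    + assert (HW : W j (l + j) = RtoC 1).
      { replace (l + j)%nat with (jj k l j 0) by (unfold jj; lia). rewrite W_in by auto. simpl. ceq. }
      rewrite HW in Hc. rewrite <- Hc. destruct (c j). unfold Cconj, RtoC; ceq.
    + intros r Hr Hrj. rewrite W_other. destruct (c r); unfold Cconj, RtoC; ceq.
      replace (l + j - l)%nat with j by lia. rewrite Nat.mod_small by auto. auto.
  - intros psi [Hl2 Horth].
    assert (Hrow : forall j, Row k l theta f s (fun n => Cconj (psi n)) j = RtoC 0).
    { apply orth_to_rows; auto. }
    exists (fun r => psi (l + r)%nat). intros n.
    destruct (le_lt_dec l n) as [Hln | Hln].
    + set (r0 := ((n - l) mod (k - l))%nat).
      assert (Hr0 : (r0 < k - l)%nat) by (apply Nat.mod_upper_bound; lia).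
      rewrite (csum_single _ _ r0); auto.
      2:{ intros r Hr Hne. rewrite W_other by auto. destruct (psi (l + r)%nat); unfold Cconj, RtoC; ceq. }
      pose proof (decomp n Hln) as Hd. fold r0 in Hd.
      set (t := ((n - l) / (k - l))%nat) in Hd. clearbody t. rewrite Hd.
      rewrite W_in by auto.
      pose proof (class_unique psi Hrow r0 Hr0 t) as HU.
      replace (jj k l r0 0) with (l + r0)%nat in HU by (unfold jj; lia).
      assert (HU2 : Cconj (psi (jj k l r0 t)) = Cmult (Cconj (psi (l + r0)%nat)) (Cmult (cpow (Cconj (xi theta)) t) (Y k l f s r0 t))).
      { pose proof (cpow_unit theta t) as Hu.
        transitivity (Cmult (Cmult (cpow (Cconj (xi theta)) t) (cpow (xi theta) t)) (Cconj (psi (jj k l r0 t)))).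
        rewrite Cmult_comm in Hu. rewrite Hu. ring.
        rewrite <- Cmult_assoc, HU. ring. }
      rewrite <- (Cconj_conj (psi (jj k l r0 t))). rewrite HU2.
      rewrite Cmult_conj, Cconj_conj. reflexivity.
    + rewrite csum_zero.
      2:{ intros r Hr. rewrite W_out by auto. destruct (psi (l + r)%nat); unfold Cconj, RtoC; ceq. }
      pose proof (Hrow n) as HR. unfold Row in HR.
      rewrite (bc_zero k l n Hln) in HR.
      assert (HE : (if (k - l <=? n)%nat then Cmult (Cmult (Cconj (xi theta)) (RtoC (bc k l (n - (k - l))))) (Cconj (psi (n - (k - l))%nat)) else RtoC 0) = RtoC 0).
      { destruct (k - l <=? n)%nat. rewrite (bc_zero k l (n - (k - l))) by lia. ring. reflexivity. }
      rewrite HE in HR. unfold hC in HR.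
      assert (Cmult (f n, s) (Cconj (psi n)) = RtoC 0).
      { rewrite <- HR. ring. }
      apply hC_nonzero in H; auto.
      rewrite <- (Cconj_conj (psi n)). rewrite H. unfold Cconj, RtoC; ceq.
Qed.
End Fin.


Theorem corollary4p17 (k l : nat) (theta : R) (f : nat -> R) (kappa : R) (lam : nat -> R) :
  (l < k)%nat -> (3 <= k + l)%nat ->
  (forall n, 0 <= f n) ->
  asymp_expansion (fun n => f n * Rpower (INR n) (- INR (k + l) / 2)) lam ->
  lam 0%nat = kappa ->
  kappa < 2 ->
  def_index_plus (opA k l theta f) (k - l) /\ def_index_minus (opA k l theta f) (k - l).
Proof.
  intros Hlk H3 Hf Has Hk0 Hk2. split.
  - unfold def_index_plus. exact (main_dim k l theta f 1 Hlk H3 ltac:(lra) lam kappa Hf Has Hk0 Hk2).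
  - unfold def_index_minus. exact (main_dim k l theta f (-1) Hlk H3 ltac:(lra) lam kappa Hf Has Hk0 Hk2).
Qed.
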